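(* Let $\rho\in\mathbb R$, let $\kappa_{\mathbf a}:\mathbb H_\rho\times\mathbb H_\rho\to\mathbb C$ be a positive semi-definite Dirichlet series kernel with coefficient matrix $\mathbf a=(a_{m,n})$ and associated reproducing kernel Hilbert space $\mathscr H_{\mathbf a}$. Let $f(s)=\sum_{n\ge1}\hat f(n)n^{-s}$ be a Dirichlet series convergent at every $s\in\mathbb H_\rho$. Then $f\in\mathscr H_{\mathbf a}$ if and only if there exists a real number $c\ge0$ such that the matrix $\big(c^2a_{m,n}-\hat f(m)\overline{\hat f(n)}\big)_{m,n=1}^\infty$ is formally positive semi-definite.
   Context: $\mathbb H_\rho=\{\Re s>\rho\}$. $\kappa_{\mathbf a}(s,u)=\sum_{m,n\ge1}a_{m,n}m^{-s}n^{-\bar u}$ is a Dirichlet series kernel on $\mathbb H_\rho$ if $(s,u)\mapsto\kappa_{\mathbf a}(s,\bar u)$ is regularly convergent on $\mathbb H_\rho\times\mathbb H_\rho$ (the double series converges at each point and every row and column series converges there). $\mathscr H_{\mathbf a}$ is the Hilbert space of functions on $\mathbb H_\rho$ with $\kappa_{\mathbf a}(\cdot,t)\in\mathscr H_{\mathbf a}$ and $\langle f,\kappa_{\mathbf a}(\cdot,t)\rangle=f(t)$. An infinite matrix is formally positive semi-definite if all its finite principal sections $(x_{m,n})_{m,n\in F}$, $F\subset\mathbb N$ finite, are positive semi-definite. *)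

(* Defs.v *)
From Stdlib Require Import Reals List.
From Coquelicot Require Import Coquelicot.
Open Scope R_scope.

(* Convention: coefficient sequences/matrices are indexed from 0, with
   index i standing for the integer i+1:  fh i = \hat f(i+1),
   a i j = a_{i+1,j+1}. *)

Definition Hrho (rho : R) := { s : C | rho < Re s }.

(* n^{-s} for a positive integer n and complex s:
   exp(-s log n) = exp(-Re s log n) (cos(Im s log n) - i sin(Im s log n)). *)
Definition npow_neg (n : nat) (s : C) : C :=
  let l := ln (INR n) in
  (exp (- Re s * l) * cos (Im s * l), - (exp (- Re s * l) * sin (Im s * l))).

Fixpoint csum (u : nat -> C) (N : nat) : C :=
  match N with O => RtoC 0 | S N' => Cplus (csum u N') (u N') end.

Definition series_to (u : nat -> C) (L : C) : Prop :=
  forall eps : R, 0 < eps -> exists N0 : nat,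
    forall N, (N0 <= N)%nat -> Cmod (Cminus (csum u N) L) < eps.

Definition series_cv (u : nat -> C) : Prop := exists L, series_to u L.

Definition dsum (x : nat -> nat -> C) (M N : nat) : C :=
  csum (fun m => csum (fun n => x m n) N) M.

Definition dseries_to (x : nat -> nat -> C) (L : C) : Prop :=
  forall eps : R, 0 < eps -> exists N0 : nat,
    forall M N, (N0 <= M)%nat -> (N0 <= N)%nat ->
      Cmod (Cminus (dsum x M N) L) < eps.

Definition regularly_cv_to (x : nat -> nat -> C) (L : C) : Prop :=
  dseries_to x L /\
  (forall m, series_cv (fun n => x m n)) /\
  (forall n, series_cv (fun m => x m n)).

Definition kterm (a : nat -> nat -> C) (s u : C) (m n : nat) : C :=
  Cmult (Cmult (a m n) (npow_neg (S m) s)) (npow_neg (S n) u).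

(* K is the Dirichlet series kernel with coefficient matrix a on H_rho:
   (s,u) |-> kappa_a(s, ubar) is regularly convergent on H_rho x H_rho and
   K s u = kappa_a(s,u) = sum a_{m,n} m^{-s} n^{-ubar}.  (Since u in H_rho
   iff ubar in H_rho, quantifying over u with conj u is the same.) *)
Definition is_dirichlet_kernel (rho : R) (a : nat -> nat -> C)
  (K : Hrho rho -> Hrho rho -> C) : Prop :=
  forall s u : Hrho rho,
    regularly_cv_to (kterm a (proj1_sig s) (Cconj (proj1_sig u))) (K s u).

Definition psd_kernel {X : Type} (K : X -> X -> C) : Prop :=
  forall pts : list (X * C),
    let q := fold_right Cplus (RtoC 0)
      (map (fun p => fold_right Cplus (RtoC 0)
         (map (fun r => Cmult (Cmult (snd p) (Cconj (snd r))) (K (fst p) (fst r)))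
              pts)) pts) in
    Im q = 0 /\ 0 <= Re q.

Definition formally_psd (x : nat -> nat -> C) : Prop :=
  forall (F : list nat) (c : nat -> C), NoDup F ->
    let q := fold_right Cplus (RtoC 0)
      (map (fun m => fold_right Cplus (RtoC 0)
         (map (fun n => Cmult (Cmult (Cconj (c m)) (x m n)) (c n)) F)) F) in
    Im q = 0 /\ 0 <= Re q.

Definition fzero {rho} : Hrho rho -> C := fun _ => RtoC 0.
Definition fadd {rho} (f g : Hrho rho -> C) : Hrho rho -> C :=
  fun s => Cplus (f s) (g s).
Definition fscal {rho} (c : C) (f : Hrho rho -> C) : Hrho rho -> C :=
  fun s => Cmult c (f s).
Definition fsub {rho} (f g : Hrho rho -> C) : Hrho rho -> C :=
  fun s => Cminus (f s) (g s).

Record RKHS (rho : R) (K : Hrho rho -> Hrho rho -> C) := {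
  mem : (Hrho rho -> C) -> Prop;
  ip : (Hrho rho -> C) -> (Hrho rho -> C) -> C;
  mem0 : mem fzero;
  memD : forall f g, mem f -> mem g -> mem (fadd f g);
  memZ : forall c f, mem f -> mem (fscal c f);
  ipD : forall f g h, mem f -> mem g -> mem h ->
          ip (fadd f g) h = Cplus (ip f h) (ip g h);
  ipZ : forall c f g, mem f -> mem g -> ip (fscal c f) g = Cmult c (ip f g);
  ip_sym : forall f g, mem f -> mem g -> ip g f = Cconj (ip f g);
  ip_pos : forall f, mem f -> 0 <= Re (ip f f);
  ip_def : forall f, mem f -> ip f f = RtoC 0 -> f = fzero;
  complete : forall u : nat -> (Hrho rho -> C),
    (forall k, mem (u k)) ->
    (forall eps, 0 < eps -> exists N0, forall k l, (N0 <= k)%nat -> (N0 <= l)%nat ->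
        sqrt (Re (ip (fsub (u k) (u l)) (fsub (u k) (u l)))) < eps) ->
    exists g, mem g /\
      (forall eps, 0 < eps -> exists N0, forall k, (N0 <= k)%nat ->
        sqrt (Re (ip (fsub (u k) g) (fsub (u k) g))) < eps);
  kmem : forall t, mem (fun s => K s t);
  repro : forall f t, mem f -> ip f (fun s => K s t) = f t
}.

(* f belongs to H_K (the RKHS of K is unique, so "some RKHS of K
   contains f" is the same as "f belongs to the RKHS of K") *)
Definition in_RKHS (rho : R) (K : Hrho rho -> Hrho rho -> C)
  (f : Hrho rho -> C) : Prop :=
  exists H : RKHS rho K, mem rho K H f.

(* Main.v *)
Require Import Defs.
From Stdlib Require Import Reals List Lra Permutation Lia Classical ClassicalEpsilon FunctionalExtensionality.
From Coquelicot Require Import Coquelicot.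
Open Scope R_scope.

Definition lsum {A} (l : list A) (g : A -> C) : C := fold_right Cplus (RtoC 0) (map g l).
Definition rsum {A} (l : list A) (g : A -> R) : R := fold_right Rplus 0 (map g l).

Lemma lsum_nil {A} (g : A -> C) : lsum nil g = RtoC 0. Proof. reflexivity. Qed.
Lemma lsum_cons {A} (a : A) l g : lsum (a :: l) g = Cplus (g a) (lsum l g). Proof. reflexivity. Qed.
Lemma rsum_cons {A} (a : A) l g : rsum (a :: l) g = g a + rsum l g. Proof. reflexivity. Qed.

Lemma lsum_app {A} (l1 l2 : list A) g : lsum (l1 ++ l2) g = Cplus (lsum l1 g) (lsum l2 g).
Proof. induction l1; simpl. unfold lsum; simpl. ring. unfold lsum in *; simpl. rewrite IHl1. ring. Qed.

Lemma lsum_ext {A} (l : list A) g h : (forall x, In x l -> g x = h x) -> lsum l g = lsum l h.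
Proof. induction l; intros H; simpl. reflexivity. unfold lsum in *; simpl. rewrite H by (left; auto).
  rewrite IHl; auto. intros; apply H; right; auto. Qed.

Lemma rsum_ext {A} (l : list A) g h : (forall x, In x l -> g x = h x) -> rsum l g = rsum l h.
Proof. induction l; intros H; simpl. reflexivity. unfold rsum in *; simpl. rewrite H by (left; auto).
  rewrite IHl; auto. intros; apply H; right; auto. Qed.

Lemma lsum_plus {A} (l : list A) g h : lsum l (fun x => Cplus (g x) (h x)) = Cplus (lsum l g) (lsum l h).
Proof. induction l; unfold lsum in *; simpl. ring. rewrite IHl. ring. Qed.

Lemma lsum_scal_l {A} (l : list A) c g : lsum l (fun x => Cmult c (g x)) = Cmult c (lsum l g).
Proof. induction l; unfold lsum in *; simpl. ring. rewrite IHl. ring. Qed.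

Lemma lsum_scal_r {A} (l : list A) c g : lsum l (fun x => Cmult (g x) c) = Cmult (lsum l g) c.
Proof. induction l; unfold lsum in *; simpl. ring. rewrite IHl. ring. Qed.

Lemma lsum_zero {A} (l : list A) : lsum l (fun _ => RtoC 0) = RtoC 0.
Proof. induction l; unfold lsum in *; simpl. ring. rewrite IHl. ring. Qed.

Lemma lsum_conj {A} (l : list A) g : Cconj (lsum l g) = lsum l (fun x => Cconj (g x)).
Proof. induction l; unfold lsum in *; simpl. apply injective_projections; simpl; ring.
  rewrite Cplus_conj, IHl. reflexivity. Qed.

Lemma lsum_swap {A B} (l1 : list A) (l2 : list B) (g : A -> B -> C) :
  lsum l1 (fun a => lsum l2 (fun b => g a b)) = lsum l2 (fun b => lsum l1 (fun a => g a b)).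
Proof. induction l1; simpl.
  - rewrite lsum_nil. symmetry. apply lsum_zero.
  - rewrite lsum_cons, IHl1. rewrite <- lsum_plus. apply lsum_ext. intros; rewrite lsum_cons; reflexivity. Qed.

Lemma lsum_map {A B} (f : A -> B) l g : lsum (map f l) g = lsum l (fun x => g (f x)).
Proof. unfold lsum. rewrite map_map. reflexivity. Qed.

Lemma Re_lsum {A} (l : list A) g : Re (lsum l g) = rsum l (fun x => Re (g x)).
Proof. induction l; unfold lsum, rsum in *; simpl. reflexivity. rewrite <- IHl. reflexivity. Qed.
Lemma Im_lsum {A} (l : list A) g : Im (lsum l g) = rsum l (fun x => Im (g x)).
Proof. induction l; unfold lsum, rsum in *; simpl. reflexivity. rewrite <- IHl. reflexivity. Qed.

Lemma Cmod_lsum {A} (l : list A) g : Cmod (lsum l g) <= rsum l (fun x => Cmod (g x)).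
Proof. induction l; unfold lsum, rsum in *; simpl. rewrite Cmod_0; lra.
  eapply Rle_trans. apply Cmod_triangle. lra. Qed.

Lemma rsum_le {A} (l : list A) g h : (forall x, In x l -> g x <= h x) -> rsum l g <= rsum l h.
Proof. induction l; intros H; unfold rsum in *; simpl. lra.
  assert (g a <= h a) by (apply H; left; auto). assert (fold_right Rplus 0 (map g l) <= fold_right Rplus 0 (map h l)) by (apply IHl; intros; apply H; right; auto). lra. Qed.

Lemma rsum_nonneg {A} (l : list A) g : (forall x, In x l -> 0 <= g x) -> 0 <= rsum l g.
Proof. intros H. assert (rsum l (fun _ => 0) = 0). { induction l; unfold rsum in *; simpl; auto. rewrite IHl. lra. intros; apply H; right; auto. }
  rewrite <- H0. apply rsum_le. auto. Qed.

Lemma rsum_scal_l {A} (l : list A) c g : rsum l (fun x => c * g x) = c * rsum l g.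
Proof. induction l; unfold rsum in *; simpl. ring. rewrite IHl. ring. Qed.
Lemma rsum_plus {A} (l : list A) g h : rsum l (fun x => g x + h x) = rsum l g + rsum l h.
Proof. induction l; unfold rsum in *; simpl. ring. rewrite IHl. ring. Qed.

Lemma csum_seq (u : nat -> C) N : csum u N = lsum (seq 0 N) u.
Proof. induction N. reflexivity. change (csum u (S N)) with (Cplus (csum u N) (u N)). rewrite seq_S, lsum_app, IHN. unfold lsum; simpl. ring. Qed.

Lemma lsum_perm {A} (l1 l2 : list A) g : Permutation l1 l2 -> lsum l1 g = lsum l2 g.
Proof. induction 1; unfold lsum in *; simpl; auto. rewrite IHPermutation; auto. ring. congruence. Qed.

Definition cv (u : nat -> C) (l : C) : Prop :=
  forall eps : R, 0 < eps -> exists N0 : nat, forall n, (N0 <= n)%nat -> Cmod (Cminus (u n) l) < eps.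

Lemma cv_const c : cv (fun _ => c) c.
Proof. intros e He. exists 0%nat. intros. replace (Cminus c c) with (RtoC 0) by ring. rewrite Cmod_0; lra. Qed.

Lemma cv_ext u v l : (forall n, u n = v n) -> cv u l -> cv v l.
Proof. intros H Hu e He. destruct (Hu e He) as [N HN]. exists N; intros; rewrite <- H; auto. Qed.

Lemma cv_ev_ext u v l N1 : (forall n, (N1 <= n)%nat -> u n = v n) -> cv u l -> cv v l.
Proof. intros H Hu e He. destruct (Hu e He) as [N HN]. exists (max N N1); intros; rewrite <- H by lia; apply HN; lia. Qed.

Lemma cv_limeq u l l' : l = l' -> cv u l -> cv u l'. Proof. intros ->; auto. Qed.

Lemma cv_plus u v l m : cv u l -> cv v m -> cv (fun n => Cplus (u n) (v n)) (Cplus l m).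
Proof. intros Hu Hv e He. destruct (Hu (e/2)) as [N1 H1]. lra. destruct (Hv (e/2)) as [N2 H2]. lra.
  exists (max N1 N2). intros n Hn. specialize (H1 n ltac:(lia)). specialize (H2 n ltac:(lia)).
  replace (Cminus (Cplus (u n) (v n)) (Cplus l m)) with (Cplus (Cminus (u n) l) (Cminus (v n) m)) by ring.
  eapply Rle_lt_trans. apply Cmod_triangle. lra. Qed.

Lemma cv_0_iff u l : cv u l <-> cv (fun n => Cminus (u n) l) (RtoC 0).
Proof. split; intros H e He; destruct (H e He) as [N HN]; exists N; intros n Hn; specialize (HN n Hn).
  replace (Cminus (Cminus (u n) l) 0) with (Cminus (u n) l) by ring. auto.
  replace (Cminus (u n) l) with (Cminus (Cminus (u n) l) 0) by ring. auto. Qed.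

Lemma finite_bound (g : nat -> R) N : exists B, 0 < B /\ forall n, (n < N)%nat -> g n <= B.
Proof. induction N. exists 1. split. lra. intros; lia.
  destruct IHN as [B [HB HB']].
  exists (Rmax B (g N)). split. eapply Rlt_le_trans. apply HB. apply Rmax_l.
  intros n Hn. destruct (Nat.eq_dec n N). subst. apply Rmax_r. eapply Rle_trans. apply HB'. lia. apply Rmax_l. Qed.

Lemma cv_bounded u l : cv u l -> exists B, 0 < B /\ forall n, Cmod (u n) <= B.
Proof. intros H. destruct (H 1 Rlt_0_1) as [N HN].
  destruct (finite_bound (fun n => Cmod (u n)) N) as [B [HB1 HB2]].
  exists (B + Cmod l + 1). split. pose proof (Cmod_ge_0 l); lra. intros n. destruct (Nat.lt_ge_cases n N).
  pose proof (HB2 n H0). pose proof (Cmod_ge_0 l); simpl in *; lra.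
  specialize (HN n H0). replace (u n) with (Cplus (Cminus (u n) l) l) by ring.
  eapply Rle_trans. apply Cmod_triangle. pose proof (Cmod_ge_0 l). lra. Qed.

Lemma cv_mult u v l m : cv u l -> cv v m -> cv (fun n => Cmult (u n) (v n)) (Cmult l m).
Proof. intros Hu Hv. destruct (cv_bounded _ _ Hu) as [B [HB HBu]].
  intros e He. assert (Hm : 0 <= Cmod m) by apply Cmod_ge_0.
  destruct (Hu (e / 2 / (Cmod m + 1))) as [N1 H1]. apply Rdiv_lt_0_compat; lra.
  destruct (Hv (e / 2 / B)) as [N2 H2]. apply Rdiv_lt_0_compat; lra.
  exists (max N1 N2). intros n Hn. specialize (H1 n ltac:(lia)). specialize (H2 n ltac:(lia)).
  replace (Cminus (Cmult (u n) (v n)) (Cmult l m)) with (Cplus (Cmult (u n) (Cminus (v n) m)) (Cmult (Cminus (u n) l) m)) by ring.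
  eapply Rle_lt_trans. apply Cmod_triangle. rewrite !Cmod_mult.
  assert (Cmod (u n) * Cmod (Cminus (v n) m) <= B * (e/2/B)).
  { apply Rmult_le_compat; auto using Cmod_ge_0. lra. }
  assert (Cmod (Cminus (u n) l) * Cmod m <= e/2/(Cmod m + 1) * (Cmod m + 1)).
  { apply Rmult_le_compat; auto using Cmod_ge_0. lra. lra. }
  replace (B * (e/2/B)) with (e/2) in H by (field; lra).
  replace (e/2/(Cmod m + 1) * (Cmod m + 1)) with (e/2) in H0 by (field; lra).
  assert (Cmod (u n) * Cmod (Cminus (v n) m) + Cmod (Cminus (u n) l) * Cmod m <= e/2 + e/2) by lra.
  assert (Cmod (Cminus (u n) l) * Cmod m < e/2).
  { destruct (Req_dec (Cmod m) 0). rewrite H4; lra.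
    apply Rle_lt_trans with (e/2/(Cmod m + 1) * Cmod m). apply Rmult_le_compat_r; auto; lra.
    apply Rlt_le_trans with (e/2/(Cmod m+1) * (Cmod m + 1)). apply Rmult_lt_compat_l. apply Rdiv_lt_0_compat; lra. lra. right; field; lra. }
  lra. Qed.

Lemma cv_scal c u l : cv u l -> cv (fun n => Cmult c (u n)) (Cmult c l).
Proof. intros; apply cv_mult; auto using cv_const. Qed.

Lemma cv_conj u l : cv u l -> cv (fun n => Cconj (u n)) (Cconj l).
Proof. intros H e He. destruct (H e He) as [N HN]. exists N. intros n Hn. rewrite <- Cminus_conj, Cmod_conj. auto. Qed.

Lemma cv_opp u l : cv u l -> cv (fun n => Cminus (RtoC 0) (u n)) (Cminus (RtoC 0) l).
Proof. intros H e He. destruct (H e He) as [N HN]. exists N. intros n Hn.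
  replace (Cminus (Cminus 0 (u n)) (Cminus 0 l)) with (Copp (Cminus (u n) l)) by ring. rewrite Cmod_opp. auto. Qed.

Lemma cv_minus u v l m : cv u l -> cv v m -> cv (fun n => Cminus (u n) (v n)) (Cminus l m).
Proof. intros Hu Hv. eapply cv_ext. 2: eapply cv_limeq. 3: apply (cv_plus _ _ _ _ Hu (cv_opp _ _ Hv)).
  intros; simpl; unfold Cminus; ring. unfold Cminus; ring. Qed.

Lemma cv_lsum {A} (l : list A) (u : A -> nat -> C) (L : A -> C) :
  (forall a, In a l -> cv (u a) (L a)) -> cv (fun n => lsum l (fun a => u a n)) (lsum l L).
Proof. induction l; intros H.
  - apply (cv_const (RtoC 0)).
  - simpl. apply cv_plus. apply H; left; auto. apply IHl. intros; apply H; right; auto. Qed.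

Lemma cv_unique u l m : cv u l -> cv u m -> l = m.
Proof. intros Hl Hm. apply NNPP; intros Hne.
  assert (Hp : 0 < Cmod (Cminus l m)). { apply Cmod_gt_0. intros Heq. apply Hne. replace l with (Cplus (Cminus l m) m) by ring. rewrite Heq. ring. }
  destruct (Hl (Cmod (Cminus l m) / 2)) as [N1 H1]. lra. destruct (Hm (Cmod (Cminus l m) / 2)) as [N2 H2]. lra.
  specialize (H1 (max N1 N2) ltac:(lia)). specialize (H2 (max N1 N2) ltac:(lia)).
  replace (Cminus l m) with (Cminus (Cminus (u (max N1 N2)) m) (Cminus (u (max N1 N2)) l)) in Hp, H1, H2 by ring.
  pose proof (Cmod_triangle (Cminus (u (max N1 N2)) m) (Copp (Cminus (u (max N1 N2)) l))). rewrite Cmod_opp in H. replace (Cplus (Cminus (u (max N1 N2)) m) (Copp (Cminus (u (max N1 N2)) l))) with (Cminus (Cminus (u (max N1 N2)) m) (Cminus (u (max N1 N2)) l)) in H by ring. lra. Qed.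


Lemma im_le_Cmod c : Rabs (Im c) <= Cmod c.
Proof. eapply Rle_trans. 2: apply Rmax_Cmod. apply Rmax_r. Qed.

Lemma Cmod_le_re_im c : Cmod c <= Rabs (Re c) + Rabs (Im c).
Proof. destruct c as [a b]. unfold Cmod; simpl. pose proof (Rabs_pos a); pose proof (Rabs_pos b).
  rewrite <- (sqrt_pow2 (Rabs a + Rabs b)) by lra.
  apply sqrt_le_1_alt. replace ((Rabs a + Rabs b)^2) with (Rabs a ^2 + Rabs b ^2 + 2 * Rabs a * Rabs b) by ring.
  rewrite !pow2_abs.
  assert (0 <= Rabs a * Rabs b) by (apply Rmult_le_pos; auto). simpl. lra. Qed.

Definition ccauchy (u : nat -> C) : Prop :=
  forall eps, 0 < eps -> exists N, forall k l, (N <= k)%nat -> (N <= l)%nat -> Cmod (Cminus (u k) (u l)) < eps.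

Lemma ccauchy_cv u : ccauchy u -> exists l, cv u l.
Proof. intros H.
  assert (Hr : Cauchy_crit (fun n => Re (u n))).
  { intros e He. destruct (H e He) as [N HN]. exists N. intros n m Hn Hm. unfold Rdist.
    eapply Rle_lt_trans. 2: apply (HN n m Hn Hm). eapply Rle_trans. 2: apply re_le_Cmod. right. f_equal. }
  assert (Hi : Cauchy_crit (fun n => Im (u n))).
  { intros e He. destruct (H e He) as [N HN]. exists N. intros n m Hn Hm. unfold Rdist.
    eapply Rle_lt_trans. 2: apply (HN n m Hn Hm). eapply Rle_trans. 2: apply im_le_Cmod. right. f_equal. }
  destruct (Rcomplete.R_complete _ Hr) as [a Ha]. destruct (Rcomplete.R_complete _ Hi) as [b Hb].
  exists (a, b). intros e He. destruct (Ha (e/2)) as [N1 H1]. lra. destruct (Hb (e/2)) as [N2 H2]. lra.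
  exists (max N1 N2). intros n Hn. eapply Rle_lt_trans. apply Cmod_le_re_im.
  specialize (H1 n ltac:(lia)). specialize (H2 n ltac:(lia)). unfold Rdist, Re, Im, Rminus in *. simpl. lra. Qed.

Lemma CS_real A B X : 0 <= B -> 0 <= X -> (forall t, 0 <= A - 2 * t * X + t * t * X * B) -> X <= A * B.
Proof. intros HB HX H. destruct (Req_dec B 0).
  - subst. rewrite Rmult_0_r. destruct (Req_dec X 0). lra. specialize (H ((Rabs A + 1) / X)).
    replace (A - 2 * ((Rabs A + 1) / X) * X + (Rabs A + 1) / X * ((Rabs A + 1) / X) * X * 0) with (A - 2 * (Rabs A + 1)) in H by (field; auto).
    pose proof (Rle_abs A). pose proof (Rabs_pos A). lra.
  - specialize (H (/ B)). replace (A - 2 * / B * X + / B * / B * X * B) with (A - X / B) in H by (field; auto).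
    assert (X / B <= A) by lra. apply Rmult_le_compat_r with (r := B) in H1; auto.
    replace (X / B * B) with X in H1 by (field; auto). lra. Qed.

Lemma CS_C (A B : R) (W : C) : 0 <= B ->
  (forall z : C, 0 <= Re (Cplus (Cminus (Cminus (RtoC A) (Cmult (Cconj z) W)) (Cmult z (Cconj W))) (Cmult (Cmult z (Cconj z)) (RtoC B)))) ->
  Cmod W ^ 2 <= A * B.
Proof. intros HB H. apply CS_real. auto. apply pow2_ge_0.
  intros t. specialize (H (Cmult (RtoC t) W)). rewrite Cmod2_alt. destruct W as [w1 w2].
  simpl in *. nra. Qed.

Lemma inv_small eps : 0 < eps -> exists N, forall k, (N <= k)%nat -> / (INR k + 1) < eps.
Proof. intros He. destruct (INR_unbounded (/ eps)) as [N HN]. exists N. intros k Hk.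
  apply le_INR in Hk. pose proof (pos_INR k). 
  replace eps with (/ / eps) by (field; lra). apply Rinv_lt_contravar.
  apply Rmult_lt_0_compat. apply Rinv_0_lt_compat; lra. lra. lra. Qed.

Lemma sqrt_diff a b : 0 <= a -> 0 <= b -> Rabs (sqrt a - sqrt b) <= sqrt (Rabs (a - b)).
Proof. intros Ha Hb. pose proof (sqrt_pos a). pose proof (sqrt_pos b).
  pose proof (sqrt_sqrt a Ha). pose proof (sqrt_sqrt b Hb).
  rewrite <- (sqrt_pow2 (Rabs (sqrt a - sqrt b))) by apply Rabs_pos. apply sqrt_le_1_alt.
  rewrite pow2_abs.
  destruct (Rle_dec (sqrt b) (sqrt a)).
  - rewrite Rabs_right by nra. nra.
  - rewrite Rabs_left1 by nra. nra. Qed.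

Lemma cv_re_nonneg u l : cv u l -> (forall k, 0 <= Re (u k)) -> 0 <= Re l.
Proof. intros H Hp. destruct (Rle_dec 0 (Re l)). auto. exfalso.
  destruct (H (- Re l)) as [N HN]. lra. specialize (HN N (le_n _)). pose proof (re_le_Cmod (Cminus (u N) l)).
  specialize (Hp N). assert (Rabs (Re (Cminus (u N) l)) < - Re l) by lra.
  replace (Re (Cminus (u N) l)) with (Re (u N) - Re l) in H1 by (unfold Cminus, Cplus, Copp, Re; simpl; ring).
  apply Rabs_def2 in H1. lra. Qed.


Section PSpace.
Variable rho : R.
Variable K : Hrho rho -> Hrho rho -> C.
Hypothesis Hpsd : psd_kernel K.

Lemma K_diag s : Im (K s s) = 0.
Proof. destruct (Hpsd ((s, RtoC 1) :: nil)) as [H _]. simpl in H.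
  destruct (K s s) as [a b]. unfold Im, Cplus, Cmult, Cconj in *; simpl in *. lra. Qed.

Lemma K_herm s t : K t s = Cconj (K s t).
Proof. pose proof (K_diag s). pose proof (K_diag t).
  destruct (Hpsd ((s, RtoC 1) :: (t, RtoC 1) :: nil)) as [H1 _].
  destruct (Hpsd ((s, RtoC 1) :: (t, Ci) :: nil)) as [H2 _]. simpl in H1, H2.
  destruct (K s s) as [a1 b1]. destruct (K t t) as [a2 b2]. destruct (K s t) as [a3 b3]. destruct (K t s) as [a4 b4].
  unfold Im, Re, Cplus, Cmult, Cconj, Ci in *; simpl in *. apply injective_projections; simpl; lra. Qed.

Definition PP := list (Hrho rho * C).
Definition eval (u : PP) (s : Hrho rho) : C := lsum u (fun p => Cmult (snd p) (K s (fst p))).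
Definition ipP (u v : PP) : C :=
  lsum u (fun p => lsum v (fun r => Cmult (Cmult (snd p) (Cconj (snd r))) (K (fst r) (fst p)))).
Definition sc (a : C) (u : PP) : PP := map (fun p => (fst p, Cmult a (snd p))) u.
Definition psub (u v : PP) : PP := u ++ sc (RtoC (-1)) v.
Definition nP (u : PP) : R := sqrt (Re (ipP u u)).

Lemma eval_app u v s : eval (u ++ v) s = Cplus (eval u s) (eval v s).
Proof. unfold eval. apply lsum_app. Qed.
Lemma eval_sc a u s : eval (sc a u) s = Cmult a (eval u s).
Proof. unfold eval, sc. rewrite lsum_map, <- lsum_scal_l. apply lsum_ext. intros; simpl; ring. Qed.
Lemma eval_psub u v s : eval (psub u v) s = Cminus (eval u s) (eval v s).
Proof. unfold psub. rewrite eval_app, eval_sc. unfold Cminus. ring. Qed.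
Lemma eval_nil s : eval nil s = RtoC 0. Proof. reflexivity. Qed.

Lemma ipP_appl u u' v : ipP (u ++ u') v = Cplus (ipP u v) (ipP u' v).
Proof. unfold ipP. apply lsum_app. Qed.
Lemma ipP_appr u v v' : ipP u (v ++ v') = Cplus (ipP u v) (ipP u v').
Proof. unfold ipP. rewrite <- lsum_plus. apply lsum_ext. intros. apply lsum_app. Qed.
Lemma ipP_scl a u v : ipP (sc a u) v = Cmult a (ipP u v).
Proof. unfold ipP, sc. rewrite lsum_map, <- lsum_scal_l. apply lsum_ext. intros. rewrite <- lsum_scal_l.
  apply lsum_ext. intros; simpl; ring. Qed.
Lemma ipP_scr a u v : ipP u (sc a v) = Cmult (Cconj a) (ipP u v).
Proof. unfold ipP, sc. rewrite <- lsum_scal_l. apply lsum_ext. intros. rewrite lsum_map, <- lsum_scal_l.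
  apply lsum_ext. intros; simpl. rewrite Cmult_conj. ring. Qed.
Lemma ipP_nill v : ipP nil v = RtoC 0. Proof. reflexivity. Qed.
Lemma ipP_nilr u : ipP u nil = RtoC 0. Proof. unfold ipP. apply lsum_zero. Qed.

Lemma ipP_sym u v : ipP v u = Cconj (ipP u v).
Proof. unfold ipP. rewrite lsum_conj. rewrite lsum_swap. apply lsum_ext. intros. rewrite lsum_conj. apply lsum_ext. intros.
  rewrite !Cmult_conj, Cconj_conj, <- K_herm. ring. Qed.

Lemma ipP_eval1 u t : ipP u ((t, RtoC 1) :: nil) = eval u t.
Proof. unfold ipP, eval. apply lsum_ext. intros. unfold lsum; simpl.
  apply injective_projections; simpl; ring. Qed.

Lemma ipP_eval u v : ipP u v = lsum v (fun r => Cmult (Cconj (snd r)) (eval u (fst r))).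
Proof. unfold ipP, eval. rewrite lsum_swap. apply lsum_ext. intros. rewrite <- lsum_scal_l. apply lsum_ext. intros. ring. Qed.

Lemma ipP_pos u : Im (ipP u u) = 0 /\ 0 <= Re (ipP u u).
Proof. pose proof (Hpsd (map (fun p => (fst p, Cconj (snd p))) u)) as H. cbv zeta in H.
  replace (fold_right Cplus 0
            (map (fun p => fold_right Cplus 0 (map (fun r => Cmult (Cmult (snd p) (Cconj (snd r))) (K (fst p) (fst r)))
                  (map (fun p0 => (fst p0, Cconj (snd p0))) u)))
               (map (fun p => (fst p, Cconj (snd p))) u))) with (ipP u u) in H; auto.
  change (ipP u u = lsum (map (fun p => (fst p, Cconj (snd p))) u) (fun p => lsum (map (fun p => (fst p, Cconj (snd p))) u) (fun r => Cmult (Cmult (snd p) (Cconj (snd r))) (K (fst p) (fst r))))).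
  rewrite lsum_map. unfold ipP. rewrite lsum_swap. apply lsum_ext; intros. rewrite lsum_map. apply lsum_ext; intros.
  simpl. rewrite Cconj_conj. ring. Qed.

Lemma nP_nonneg u : 0 <= nP u. Proof. apply sqrt_pos. Qed.
Lemma nP_sq u : nP u * nP u = Re (ipP u u).
Proof. apply sqrt_sqrt. apply ipP_pos. Qed.

Lemma ipP_real u : ipP u u = RtoC (Re (ipP u u)).
Proof. destruct (ipP_pos u) as [H _]. apply injective_projections; simpl; auto. Qed.

Lemma ipP_expand u v z :
  ipP (u ++ sc (Copp z) v) (u ++ sc (Copp z) v) =
  Cplus (Cminus (Cminus (ipP u u) (Cmult (Cconj z) (ipP u v))) (Cmult z (Cconj (ipP u v)))) (Cmult (Cmult z (Cconj z)) (ipP v v)).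
Proof. rewrite !ipP_appl, !ipP_appr, !ipP_scl, !ipP_scr, (ipP_sym u v), Copp_conj. unfold Cminus. ring. Qed.

Lemma CS_P u v : Cmod (ipP u v) ^ 2 <= Re (ipP u u) * Re (ipP v v).
Proof. apply CS_C. apply ipP_pos. intros z. pose proof (ipP_pos (u ++ sc (Copp z) v)) as [_ H].
  rewrite ipP_expand in H. rewrite (ipP_real u) in H. rewrite (ipP_real v) in H. exact H. Qed.

Lemma CS_P' u v : Cmod (ipP u v) <= nP u * nP v.
Proof. pose proof (CS_P u v). rewrite <- !nP_sq in H. pose proof (nP_nonneg u). pose proof (nP_nonneg v).
  pose proof (Cmod_ge_0 (ipP u v)). assert (0 <= nP u * nP v) by (apply Rmult_le_pos; auto). nra. Qed.

Definition equivP (u v : PP) := forall w, ipP u w = ipP v w.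

Lemma equivP_r u v w : equivP u v -> ipP w u = ipP w v.
Proof. intros H. rewrite (ipP_sym u w), (ipP_sym v w), H. reflexivity. Qed.
Lemma equivP_nP u v : equivP u v -> nP u = nP v.
Proof. intros H. unfold nP. rewrite H, (equivP_r _ _ v H). reflexivity. Qed.
Lemma equivP_eval u v t : equivP u v -> eval u t = eval v t.
Proof. intros H. rewrite <- !ipP_eval1. apply H. Qed.

Lemma Re_le_Cmod' c : Re c <= Cmod c.
Proof. eapply Rle_trans. apply Rle_abs. apply re_le_Cmod. Qed.

Lemma nP_app u v : nP (u ++ v) <= nP u + nP v.
Proof. pose proof (nP_nonneg u); pose proof (nP_nonneg v). pose proof (nP_nonneg (u ++ v)).
  assert (nP (u ++ v) * nP (u ++ v) <= (nP u + nP v) * (nP u + nP v)).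
  { rewrite nP_sq. rewrite ipP_appl, !ipP_appr. rewrite (ipP_sym u v).
    replace ((nP u + nP v) * (nP u + nP v)) with (nP u * nP u + nP v * nP v + 2 * (nP u * nP v)) by ring.
    rewrite !nP_sq. pose proof (CS_P' u v). pose proof (Re_le_Cmod' (ipP u v)).
    destruct (ipP u v) as [a b]. unfold Re, Im, Cplus, Cconj in *. simpl in *. lra. }
  nra. Qed.

Lemma nP_sc a u : nP (sc a u) = Cmod a * nP u.
Proof. unfold nP. rewrite ipP_scl, ipP_scr. rewrite (ipP_real u).
  replace (Re (Cmult a (Cmult (Cconj a) (RtoC (Re (ipP u u)))))) with (Cmod a ^ 2 * Re (ipP u u)).
  rewrite sqrt_mult. rewrite sqrt_pow2. reflexivity. apply Cmod_ge_0. apply pow2_ge_0. apply ipP_pos.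
  rewrite Cmod2_alt. destruct a as [a1 a2]. unfold Re, Im, Cmult, Cconj, RtoC; simpl. ring. Qed.

Lemma nP_small u eta : 0 < eta -> Re (ipP u u) < eta * eta -> nP u < eta.
Proof. intros He H. unfold nP. rewrite <- (sqrt_square eta) by lra. apply sqrt_lt_1_alt. split. apply ipP_pos. auto. Qed.

Lemma sc_app a u v : sc a (u ++ v) = sc a u ++ sc a v.
Proof. unfold sc. apply map_app. Qed.

Ltac eqP := let w := fresh "w" in intros w; unfold psub; repeat rewrite ?sc_app, ?ipP_appl, ?ipP_scl; try rewrite ?ipP_nill; ring.

Lemma nP_psub_sym u v : nP (psub u v) = nP (psub v u).
Proof. rewrite <- (Rmult_1_l (nP (psub v u))). rewrite <- Cmod_m1. rewrite <- nP_sc. apply equivP_nP. eqP. Qed.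

Lemma nP_tri u v w : nP (psub u w) <= nP (psub u v) + nP (psub v w).
Proof. rewrite (equivP_nP (psub u w) (psub u v ++ psub v w)). apply nP_app. eqP. Qed.

Lemma nP_le_tri u v : nP u <= nP v + nP (psub u v).
Proof. rewrite (equivP_nP u (v ++ psub u v)). apply nP_app. eqP. Qed.

Definition pcauchy (s : nat -> PP) : Prop :=
  forall eps, 0 < eps -> exists N, forall k l, (N <= k)%nat -> (N <= l)%nat -> nP (psub (s k) (s l)) < eps.

Lemma pcauchy_bounded s : pcauchy s -> exists B, 0 < B /\ forall k, nP (s k) <= B.
Proof. intros H. destruct (H 1 Rlt_0_1) as [N HN]. destruct (finite_bound (fun k => nP (s k)) N) as [B [HB HB']].
  exists (B + nP (s N) + 1). pose proof (nP_nonneg (s N)). split. lra. intros k. destruct (Nat.lt_ge_cases k N).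
  pose proof (HB' k H1). simpl in *. lra. pose proof (nP_le_tri (s k) (s N)). pose proof (HN k N H1 (le_n _)). lra. Qed.

Lemma ip_cauchy s r : pcauchy s -> pcauchy r -> ccauchy (fun k => ipP (s k) (r k)).
Proof. intros Hs Hr. destruct (pcauchy_bounded s Hs) as [B1 [HB1 HB1']]. destruct (pcauchy_bounded r Hr) as [B2 [HB2 HB2']].
  intros e He. destruct (Hs (e / 2 / B2)) as [N1 H1]. apply Rdiv_lt_0_compat; lra.
  destruct (Hr (e / 2 / B1)) as [N2 H2]. apply Rdiv_lt_0_compat; lra.
  exists (max N1 N2). intros k l Hk Hl.
  replace (Cminus (ipP (s k) (r k)) (ipP (s l) (r l))) with (Cplus (ipP (psub (s k) (s l)) (r k)) (ipP (s l) (psub (r k) (r l)))).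
  2:{ unfold psub. rewrite ipP_appl, ipP_appr, ipP_scl, ipP_scr. replace (Cconj (RtoC (-1))) with (RtoC (-1)) by (apply injective_projections; simpl; ring). unfold Cminus; ring. }
  eapply Rle_lt_trans. apply Cmod_triangle. pose proof (CS_P' (psub (s k) (s l)) (r k)). pose proof (CS_P' (s l) (psub (r k) (r l))).
  specialize (H1 k l ltac:(lia) ltac:(lia)). specialize (H2 k l ltac:(lia) ltac:(lia)).
  pose proof (HB1' l). pose proof (HB2' k).
  assert (nP (psub (s k) (s l)) * nP (r k) <= e/2/B2 * B2). { apply Rmult_le_compat; auto using nP_nonneg; lra. }
  assert (nP (s l) * nP (psub (r k) (r l)) < B1 * (e/2/B1)). { apply Rle_lt_trans with (B1 * nP (psub (r k) (r l))). apply Rmult_le_compat_r; auto using nP_nonneg. apply Rmult_lt_compat_l; auto. }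
  replace (e/2/B2*B2) with (e/2) in H5 by (field; lra). replace (B1 * (e/2/B1)) with (e/2) in H6 by (field; lra). lra. Qed.

Definition rep (g : Hrho rho -> C) (s : nat -> PP) : Prop :=
  pcauchy s /\ forall t, cv (fun k => eval (s k) t) (g t).
Definition memH (g : Hrho rho -> C) : Prop := exists s, rep g s.

Lemma rep_diff g s s' : rep g s -> rep g s' -> forall eta, 0 < eta -> exists N, forall k, (N <= k)%nat -> nP (psub (s k) (s' k)) < eta.
Proof. intros [Hs Hst] [Hs' Hst'] eta Heta.
  set (d := fun k => psub (s k) (s' k)).
  assert (Hd : pcauchy d).
  { intros e He. destruct (Hs (e/2)) as [N1 H1]. lra. destruct (Hs' (e/2)) as [N2 H2]. lra.
    exists (max N1 N2). intros k l Hk Hl. unfold d.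
    rewrite (equivP_nP _ (psub (s k) (s l) ++ sc (RtoC (-1)) (psub (s' k) (s' l)))) by eqP.
    eapply Rle_lt_trans. apply nP_app. rewrite nP_sc. rewrite Cmod_R, Rabs_m1, Rmult_1_l.
    specialize (H1 k l ltac:(lia) ltac:(lia)). specialize (H2 k l ltac:(lia) ltac:(lia)). lra. }
  assert (Hdt : forall t, cv (fun k => eval (d k) t) (RtoC 0)).
  { intros t. unfold d. eapply cv_ext. intros k. symmetry. apply eval_psub. eapply cv_limeq. 2: apply cv_minus; [apply Hst | apply Hst'].
    ring. }
  destruct (pcauchy_bounded d Hd) as [B [HB HB']].
  set (eps := eta * eta / (2 * B + 2)).
  assert (Heps : 0 < eps). { unfold eps. apply Rdiv_lt_0_compat. nra. lra. }
  destruct (Hd eps Heps) as [J HJ].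
  assert (Hc : cv (fun k => ipP (d k) (d J)) (RtoC 0)).
  { eapply cv_ext. intros k. symmetry. apply ipP_eval. eapply cv_limeq. 2: apply cv_lsum.
    2:{ intros a _. apply cv_scal. apply Hdt. } transitivity (lsum (d J) (fun _ => RtoC 0)). apply lsum_ext. intros. ring. apply lsum_zero. }
  destruct (Hc eps Heps) as [N HN]. exists (max N J). intros k Hk. apply nP_small. auto.
  assert (E : ipP (d k) (d k) = Cplus (ipP (d k) (d J)) (Cmult (RtoC (-1)) (ipP (d k) (psub (d J) (d k))))).
  { unfold psub. rewrite ipP_appr, ipP_scr. replace (Cconj (RtoC (-1))) with (RtoC (-1)) by (apply injective_projections; simpl; ring). ring. }
  change (Re (ipP (d k) (d k)) < eta * eta). rewrite E. specialize (HN k ltac:(lia)). replace (Cminus (ipP (d k) (d J)) 0) with (ipP (d k) (d J)) in HN by ring.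
  pose proof (CS_P' (d k) (psub (d J) (d k))). specialize (HJ J k ltac:(lia) ltac:(lia)). pose proof (HB' k).
  assert (nP (d k) * nP (psub (d J) (d k)) <= B * eps). { apply Rmult_le_compat; auto using nP_nonneg; lra. }
  pose proof (Re_le_Cmod' (ipP (d k) (d J))). 
  assert (Re (Cmult (RtoC (-1)) (ipP (d k) (psub (d J) (d k)))) <= Cmod (ipP (d k) (psub (d J) (d k)))).
  { eapply Rle_trans. apply Re_le_Cmod'. rewrite Cmod_mult, Cmod_R, Rabs_m1. lra. }
  assert (Re (Cplus (ipP (d k) (d J)) (Cmult (RtoC (-1)) (ipP (d k) (psub (d J) (d k))))) <= eps + B * eps).
  { unfold Re at 1, Cplus. simpl. unfold Re in H2, H3; simpl in H3. lra. }
  assert (eps + B * eps < eta * eta). { replace (eps + B * eps) with (eta * eta / 2) by (unfold eps; field; lra).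
    assert (0 < eta * eta) by nra. lra. }
  lra. Qed.

Lemma Cconj_m1 : Cconj (RtoC (-1)) = RtoC (-1).
Proof. apply injective_projections; simpl; ring. Qed.

Lemma ipP_diff a b c d : Cminus (ipP a c) (ipP b d) = Cplus (ipP (psub a b) c) (ipP b (psub c d)).
Proof. unfold psub. rewrite ipP_appl, ipP_appr, ipP_scl, ipP_scr, Cconj_m1. unfold Cminus; ring. Qed.

Lemma rep_ip_diff g h s s' r r' : rep g s -> rep g s' -> rep h r -> rep h r' ->
  cv (fun k => Cminus (ipP (s k) (r k)) (ipP (s' k) (r' k))) (RtoC 0).
Proof. intros Hs Hs' Hr Hr'. destruct (pcauchy_bounded r (proj1 Hr)) as [B1 [HB1 HB1']].
  destruct (pcauchy_bounded s' (proj1 Hs')) as [B2 [HB2 HB2']].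
  intros e He. destruct (rep_diff g s s' Hs Hs' (e / 2 / B1)) as [N1 H1]. apply Rdiv_lt_0_compat; lra.
  destruct (rep_diff h r r' Hr Hr' (e / 2 / B2)) as [N2 H2]. apply Rdiv_lt_0_compat; lra.
  exists (max N1 N2). intros k Hk. replace (Cminus (Cminus (ipP (s k) (r k)) (ipP (s' k) (r' k))) 0) with (Cminus (ipP (s k) (r k)) (ipP (s' k) (r' k))) by ring.
  rewrite ipP_diff. eapply Rle_lt_trans. apply Cmod_triangle.
  pose proof (CS_P' (psub (s k) (s' k)) (r k)). pose proof (CS_P' (s' k) (psub (r k) (r' k))).
  specialize (H1 k ltac:(lia)). specialize (H2 k ltac:(lia)). pose proof (HB1' k). pose proof (HB2' k).
  assert (nP (psub (s k) (s' k)) * nP (r k) <= e/2/B1 * B1). { apply Rmult_le_compat; auto using nP_nonneg; lra. }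
  assert (nP (s' k) * nP (psub (r k) (r' k)) <= B2 * (e/2/B2)). { apply Rmult_le_compat; auto using nP_nonneg; lra. }
  replace (e/2/B1*B1) with (e/2) in H5 by (field; lra). replace (B2 * (e/2/B2)) with (e/2) in H6 by (field; lra).
  assert (nP (psub (s k) (s' k)) * nP (r k) < e/2 \/ nP (s' k) * nP (psub (r k) (r' k)) < e / 2).
  { left. apply Rle_lt_trans with (nP (psub (s k) (s' k)) * B1). apply Rmult_le_compat_l; auto using nP_nonneg.
    apply Rlt_le_trans with (e/2/B1 * B1). apply Rmult_lt_compat_r; auto. right; field; lra. }
  lra. Qed.

Definition choose_rep (g : Hrho rho -> C) : nat -> PP := epsilon (inhabits (fun _ : nat => @nil (Hrho rho * C))) (rep g).
Definition clim (u : nat -> C) : C := epsilon (inhabits (RtoC 0)) (cv u).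
Definition ipH (g h : Hrho rho -> C) : C := clim (fun k => ipP (choose_rep g k) (choose_rep h k)).

Lemma choose_rep_spec g : memH g -> rep g (choose_rep g).
Proof. intros H. unfold choose_rep. apply epsilon_spec. exact H. Qed.
Lemma clim_spec u : (exists l, cv u l) -> cv u (clim u).
Proof. intros H. unfold clim. apply epsilon_spec. exact H. Qed.

Lemma ipH_spec g h s r : rep g s -> rep h r -> cv (fun k => ipP (s k) (r k)) (ipH g h).
Proof. intros Hs Hr. assert (Hg : memH g) by (exists s; auto). assert (Hh : memH h) by (exists r; auto).
  pose proof (choose_rep_spec g Hg) as Hg'. pose proof (choose_rep_spec h Hh) as Hh'.
  assert (Hc : cv (fun k => ipP (choose_rep g k) (choose_rep h k)) (ipH g h)).
  { apply clim_spec. apply ccauchy_cv. apply ip_cauchy. apply Hg'. apply Hh'. }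
  pose proof (rep_ip_diff g h _ _ _ _ Hg' Hs Hh' Hr) as Hd.
  eapply cv_ext. 2: eapply cv_limeq. 3: apply (cv_minus _ _ _ _ Hc Hd). intros k; simpl. unfold Cminus; ring. unfold Cminus; ring. Qed.

Lemma nP_nil : nP nil = 0.
Proof. unfold nP. rewrite ipP_nill. simpl. apply sqrt_0. Qed.

Lemma rep_add f g s r : rep f s -> rep g r -> rep (fadd f g) (fun k => s k ++ r k).
Proof. intros [Hs Hst] [Hr Hrt]. split.
  - intros e He. destruct (Hs (e/2)) as [N1 H1]. lra. destruct (Hr (e/2)) as [N2 H2]. lra.
    exists (max N1 N2). intros k l Hk Hl. rewrite (equivP_nP _ (psub (s k) (s l) ++ psub (r k) (r l))) by eqP.
    eapply Rle_lt_trans. apply nP_app. specialize (H1 k l ltac:(lia) ltac:(lia)). specialize (H2 k l ltac:(lia) ltac:(lia)). lra.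
  - intros t. eapply cv_ext. intros k. symmetry. apply eval_app. apply cv_plus; auto. Qed.

Lemma rep_sc c f s : rep f s -> rep (fscal c f) (fun k => sc c (s k)).
Proof. intros [Hs Hst]. split.
  - intros e He. destruct (Hs (e / (Cmod c + 1))) as [N HN]. apply Rdiv_lt_0_compat. auto. pose proof (Cmod_ge_0 c); lra.
    exists N. intros k l Hk Hl. rewrite (equivP_nP _ (sc c (psub (s k) (s l)))) by eqP. rewrite nP_sc.
    specialize (HN k l Hk Hl). pose proof (Cmod_ge_0 c). pose proof (nP_nonneg (psub (s k) (s l))).
    apply Rle_lt_trans with ((Cmod c + 1) * nP (psub (s k) (s l))). nra.
    apply Rlt_le_trans with ((Cmod c + 1) * (e / (Cmod c + 1))). apply Rmult_lt_compat_l; lra. right; field; lra.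
  - intros t. eapply cv_ext. intros k. symmetry. apply eval_sc. apply cv_scal; auto. Qed.

Lemma rep_sub f g s r : rep f s -> rep g r -> rep (fsub f g) (fun k => psub (s k) (r k)).
Proof. intros Hs Hr. pose proof (rep_add _ _ _ _ Hs (rep_sc (RtoC (-1)) _ _ Hr)) as H.
  destruct H as [H1 H2]. split. exact H1. intros t. eapply cv_limeq. 2: apply H2. unfold fadd, fscal, fsub, Cminus. ring. Qed.

Lemma rep_const t : rep (fun s => K s t) (fun _ => (t, RtoC 1) :: nil).
Proof. split.
  - intros e He. exists 0%nat. intros. rewrite (equivP_nP _ nil) by eqP. rewrite nP_nil. auto.
  - intros t'. eapply cv_ext. 2: apply cv_const. intros k. unfold eval, lsum; simpl. ring. Qed.

Lemma rep_zero : rep fzero (fun _ => nil).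
Proof. split. intros e He. exists 0%nat. intros. rewrite (equivP_nP _ nil) by eqP. rewrite nP_nil. auto.
  intros t. apply cv_const. Qed.

Lemma memH_0 : memH fzero. Proof. exists (fun _ => nil). apply rep_zero. Qed.
Lemma memH_D f g : memH f -> memH g -> memH (fadd f g).
Proof. intros [s Hs] [r Hr]. eexists. apply rep_add; eauto. Qed.
Lemma memH_Z c f : memH f -> memH (fscal c f).
Proof. intros [s Hs]. eexists. apply rep_sc; eauto. Qed.

Lemma ipH_D f g h : memH f -> memH g -> memH h -> ipH (fadd f g) h = Cplus (ipH f h) (ipH g h).
Proof. intros [s Hs] [r Hr] [q Hq]. eapply cv_unique. apply (ipH_spec _ _ _ _ (rep_add _ _ _ _ Hs Hr) Hq).
  eapply cv_ext. 2: apply cv_plus; apply ipH_spec; eauto. intros k; simpl. symmetry. apply ipP_appl. Qed.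

Lemma ipH_Z c f g : memH f -> memH g -> ipH (fscal c f) g = Cmult c (ipH f g).
Proof. intros [s Hs] [r Hr]. eapply cv_unique. apply (ipH_spec _ _ _ _ (rep_sc c _ _ Hs) Hr).
  eapply cv_ext. 2: apply cv_scal; apply ipH_spec; eauto. intros k; simpl. symmetry. apply ipP_scl. Qed.

Lemma ipH_sym f g : memH f -> memH g -> ipH g f = Cconj (ipH f g).
Proof. intros [s Hs] [r Hr]. eapply cv_unique. apply (ipH_spec _ _ _ _ Hr Hs).
  eapply cv_ext. 2: apply cv_conj; apply ipH_spec; eauto. intros k; simpl. symmetry. rewrite ipP_sym. reflexivity. Qed.

Lemma ipH_pos f : memH f -> 0 <= Re (ipH f f).
Proof. intros [s Hs]. eapply cv_re_nonneg. apply (ipH_spec _ _ _ _ Hs Hs). intros k. apply ipP_pos. Qed.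

Lemma nP_cv_sqrt (w : nat -> PP) L : cv (fun i => ipP (w i) (w i)) L ->
  forall eps, 0 < eps -> exists N, forall i, (N <= i)%nat -> Rabs (nP (w i) - sqrt (Re L)) < eps.
Proof. intros H e He. assert (HL : 0 <= Re L). { eapply cv_re_nonneg. apply H. intros; apply ipP_pos. }
  destruct (H (e * e)) as [N HN]. nra. exists N. intros i Hi. specialize (HN i Hi).
  eapply Rle_lt_trans. apply sqrt_diff. apply ipP_pos. auto.
  rewrite <- (sqrt_square e) by lra. apply sqrt_lt_1_alt. split. apply Rabs_pos.
  eapply Rle_lt_trans. 2: apply HN. replace (Re (ipP (w i) (w i)) - Re L) with (Re (Cminus (ipP (w i) (w i)) L)).
  apply re_le_Cmod. unfold Cminus, Cplus, Copp, Re; simpl; ring. Qed.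

Lemma ipH_def f : memH f -> ipH f f = RtoC 0 -> f = fzero.
Proof. intros [s Hs] H0. pose proof (ipH_spec _ _ _ _ Hs Hs) as Hc. rewrite H0 in Hc.
  apply functional_extensionality. intros t. unfold fzero.
  eapply cv_unique. apply (proj2 Hs t).
  intros e He. set (B := nP ((t, RtoC 1) :: nil) + 1).
  assert (HB : 0 < B) by (unfold B; pose proof (nP_nonneg ((t, RtoC 1) :: nil)); lra).
  destruct (nP_cv_sqrt s _ Hc (e / B)) as [N HN]. apply Rdiv_lt_0_compat; lra.
  exists N. intros k Hk. specialize (HN k Hk). simpl in HN. rewrite sqrt_0, Rminus_0_r, Rabs_right in HN by apply Rle_ge, nP_nonneg.
  replace (Cminus (eval (s k) t) 0) with (ipP (s k) ((t, RtoC 1) :: nil)) by (rewrite ipP_eval1; ring).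
  eapply Rle_lt_trans. apply CS_P'. apply Rle_lt_trans with (nP (s k) * B).
  apply Rmult_le_compat_l. apply nP_nonneg. unfold B; lra.
  apply Rlt_le_trans with (e / B * B). apply Rmult_lt_compat_r; auto. right; field; lra. Qed.

Lemma ipH_repro f t : memH f -> ipH f (fun s => K s t) = f t.
Proof. intros [s Hs]. eapply cv_unique. apply (ipH_spec _ _ _ _ Hs (rep_const t)).
  eapply cv_ext. 2: apply (proj2 Hs t). intros k. simpl. symmetry. apply ipP_eval1. Qed.

Lemma pcauchy_eval w : pcauchy w -> forall t, ccauchy (fun k => eval (w k) t).
Proof. intros H t e He. set (B := nP ((t, RtoC 1) :: nil) + 1).
  assert (HB : 0 < B) by (unfold B; pose proof (nP_nonneg ((t, RtoC 1) :: nil)); lra).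
  destruct (H (e / B)) as [N HN]. apply Rdiv_lt_0_compat; lra. exists N. intros k l Hk Hl.
  rewrite <- !ipP_eval1.
  replace (Cminus (ipP (w k) ((t, RtoC 1) :: nil)) (ipP (w l) ((t, RtoC 1) :: nil))) with (ipP (psub (w k) (w l)) ((t, RtoC 1) :: nil))
    by (unfold psub; rewrite ipP_appl, ipP_scl; unfold Cminus; ring).
  eapply Rle_lt_trans. apply CS_P'. apply Rle_lt_trans with (nP (psub (w k) (w l)) * B).
  apply Rmult_le_compat_l. apply nP_nonneg. unfold B; lra.
  apply Rlt_le_trans with (e / B * B). apply Rmult_lt_compat_r; auto. right; field; lra. Qed.

Lemma ipH_complete (u : nat -> (Hrho rho -> C)) :
  (forall k, memH (u k)) ->
  (forall eps, 0 < eps -> exists N0, forall k l, (N0 <= k)%nat -> (N0 <= l)%nat ->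
        sqrt (Re (ipH (fsub (u k) (u l)) (fsub (u k) (u l)))) < eps) ->
  exists g, memH g /\
    (forall eps, 0 < eps -> exists N0, forall k, (N0 <= k)%nat ->
        sqrt (Re (ipH (fsub (u k) g) (fsub (u k) g))) < eps).
Proof. intros Hm Hc.
  set (s := fun k => choose_rep (u k)).
  assert (Hs : forall k, rep (u k) (s k)) by (intros; apply choose_rep_spec; auto).
  set (P := fun k N => forall i l, (N <= i)%nat -> (N <= l)%nat -> nP (psub (s k i) (s k l)) < / (INR k + 1)).
  set (j := fun k => epsilon (inhabits 0%nat) (P k)).
  assert (Hj : forall k, P k (j k)). { intros k. unfold j. apply epsilon_spec. apply (proj1 (Hs k)). apply RinvN_pos. }
  set (w := fun k => s k (j k)).
  set (D := fun k l => sqrt (Re (ipH (fsub (u k) (u l)) (fsub (u k) (u l))))).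
  assert (HD : forall k l eps, 0 < eps -> exists N, forall i, (N <= i)%nat -> Rabs (nP (psub (s k i) (s l i)) - D k l) < eps).
  { intros k l. apply (nP_cv_sqrt (fun i => psub (s k i) (s l i))). apply ipH_spec; apply rep_sub; auto. }
  assert (KB : forall k l, nP (psub (w k) (w l)) <= / (INR k + 1) + / (INR l + 1) + D k l).
  { intros k l. apply Rle_plus_epsilon. intros d Hd. destruct (HD k l d Hd) as [N HN].
    set (i := max N (max (j k) (j l))). specialize (HN i ltac:(unfold i; lia)).
    pose proof (nP_tri (w k) (s k i) (w l)). pose proof (nP_tri (s k i) (s l i) (w l)).
    pose proof (Hj k (j k) i (le_n _) ltac:(unfold i; lia)). pose proof (Hj l i (j l) ltac:(unfold i; lia) (le_n _)).
    unfold w in *. apply Rabs_def2 in HN. lra. }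
  assert (Hw : pcauchy w).
  { intros e He. destruct (Hc (e/3)) as [N0 H0]. lra. destruct (inv_small (e/3)) as [N1 H1]. lra.
    exists (max N0 N1). intros k l Hk Hl. pose proof (KB k l). pose proof (H1 k ltac:(lia)). pose proof (H1 l ltac:(lia)).
    pose proof (H0 k l ltac:(lia) ltac:(lia)). unfold D in *. lra. }
  set (g := fun t => clim (fun k => eval (w k) t)).
  assert (Hg : rep g w). { split. auto. intros t. apply clim_spec. apply ccauchy_cv. apply pcauchy_eval. auto. }
  exists g. split. exists w; auto.
  intros e He. destruct (Hc (e/5)) as [N0 H0]. lra. destruct (inv_small (e/5)) as [N1 H1]. lra.
  exists (max N0 N1). intros k Hk.
  destruct (nP_cv_sqrt (fun i => psub (s k i) (w i)) _ (ipH_spec _ _ _ _ (rep_sub _ _ _ _ (Hs k) Hg) (rep_sub _ _ _ _ (Hs k) Hg)) (e/5)) as [N2 H2]. lra.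
  set (i := max (max N0 N1) (max N2 (j k))).
  specialize (H2 i ltac:(unfold i; lia)). simpl in H2. apply Rabs_def2 in H2.
  pose proof (nP_tri (s k i) (w k) (w i)). pose proof (Hj k i (j k) ltac:(unfold i; lia) (le_n _)).
  pose proof (KB k i). pose proof (H1 k ltac:(lia)). pose proof (H1 i ltac:(unfold i; lia)). pose proof (H0 k i ltac:(lia) ltac:(unfold i; lia)).
  unfold w, D in *. lra. Qed.

Definition theRKHS : RKHS rho K :=
  {| mem := memH; ip := ipH; mem0 := memH_0; memD := memH_D; memZ := memH_Z;
     ipD := ipH_D; ipZ := ipH_Z; ip_sym := ipH_sym; ip_pos := ipH_pos; ip_def := ipH_def;
     complete := ipH_complete; kmem := fun t => ex_intro _ _ (rep_const t); repro := ipH_repro |}.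
Section Riesz.
Variable f : Hrho rho -> C.
Variable c : R.
Definition phi (u : PP) : C := lsum u (fun p => Cmult (snd p) (Cconj (f (fst p)))).
Hypothesis Hc : 0 <= c.
Hypothesis Hb : forall u, Cmod (phi u) <= c * nP u.


Lemma phi_app u v : phi (u ++ v) = Cplus (phi u) (phi v). Proof. apply lsum_app. Qed.
Lemma phi_sc a u : phi (sc a u) = Cmult a (phi u).
Proof. unfold phi, sc. rewrite lsum_map, <- lsum_scal_l. apply lsum_ext. intros; simpl; ring. Qed.

Definition Sset (x : R) : Prop := exists u, nP u <= 1 /\ x = Re (phi u).

Lemma Sset_bound : bound Sset.
Proof. exists c. intros x [u [Hu ->]]. eapply Rle_trans. apply Re_le_Cmod'. eapply Rle_trans. apply Hb.
  pose proof (nP_nonneg u). nra. Qed.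
Lemma Sset_ne : exists x, Sset x.
Proof. exists 0. exists nil. rewrite nP_nil. split. lra. reflexivity. Qed.

Definition Msup : R := proj1_sig (completeness Sset Sset_bound Sset_ne).
Lemma Msup_lub : is_lub Sset Msup. Proof. unfold Msup. destruct completeness; simpl; auto. Qed.
Lemma Msup_nonneg : 0 <= Msup.
Proof. apply (proj1 Msup_lub). exists nil. rewrite nP_nil. split. lra. reflexivity. Qed.

Lemma Msup_bound v : Re (phi v) <= Msup * nP v.
Proof. destruct (Req_dec (nP v) 0) as [H0|H0].
  - rewrite H0, Rmult_0_r. eapply Rle_trans. apply Re_le_Cmod'. eapply Rle_trans. apply Hb. rewrite H0. lra.
  - pose proof (nP_nonneg v). assert (Hp : 0 < nP v) by lra.
    assert (HS : Sset (Re (phi (sc (RtoC (/ nP v)) v)))).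
    { eexists. split. 2: reflexivity. rewrite nP_sc, Cmod_R, Rabs_right. rewrite Rinv_l by lra; lra. apply Rle_ge, Rlt_le, Rinv_0_lt_compat; auto. }
    apply (proj1 Msup_lub) in HS. rewrite phi_sc in HS. rewrite re_scal_l in HS.
    apply Rmult_le_compat_l with (r := nP v) in HS; [|lra]. replace (nP v * (/ nP v * Re (phi v))) with (Re (phi v)) in HS by (field; lra). lra. Qed.

Lemma Msup_approx k : exists u, nP u <= 1 /\ Msup - / (INR k + 1) < Re (phi u).
Proof. apply NNPP. intros H. assert (Hub : is_upper_bound Sset (Msup - / (INR k + 1))).
  { intros x [u [Hu ->]]. apply Rnot_lt_le. intros Hl. apply H. exists u; auto. }
  apply (proj2 Msup_lub) in Hub. pose proof (RinvN_pos k). lra. Qed.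

Definition useq (k : nat) : PP := epsilon (inhabits nil) (fun u => nP u <= 1 /\ Msup - / (INR k + 1) < Re (phi u)).
Lemma useq_spec k : nP (useq k) <= 1 /\ Msup - / (INR k + 1) < Re (phi (useq k)).
Proof. unfold useq. apply epsilon_spec. apply Msup_approx. Qed.

Lemma parallelogram a b : Cplus (ipP (psub a b) (psub a b)) (ipP (a ++ b) (a ++ b)) = Cplus (Cmult 2 (ipP a a)) (Cmult 2 (ipP b b)).
Proof. unfold psub. rewrite !ipP_appl, !ipP_appr, !ipP_scl, !ipP_scr, Cconj_m1. ring. Qed.

Lemma useq_cauchy_sq k l : Msup * Msup * (nP (psub (useq k) (useq l)) * nP (psub (useq k) (useq l))) <= 4 * Msup * (/ (INR k + 1) + / (INR l + 1)).
Proof. destruct (useq_spec k) as [Hk1 Hk2]. destruct (useq_spec l) as [Hl1 Hl2].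
  set (a := useq k) in *. set (b := useq l) in *. set (e := / (INR k + 1) + / (INR l + 1)).
  pose proof (RinvN_pos k). pose proof (RinvN_pos l). pose proof Msup_nonneg as HM.
  pose proof (parallelogram a b) as HP. apply (f_equal Re) in HP. simpl in HP. rewrite <- !nP_sq in HP.
  set (X := nP (psub a b)) in *. set (Y := nP (a ++ b)) in *.
  pose proof (nP_nonneg a). pose proof (nP_nonneg b). pose proof (nP_nonneg (psub a b)). pose proof (nP_nonneg (a ++ b)).
  fold X Y in H1, H2.
  assert (HY : Re (phi (a ++ b)) <= Msup * Y) by apply Msup_bound. rewrite phi_app in HY. simpl in HY.
  assert (nP a * nP a <= 1) by nra. assert (nP b * nP b <= 1) by nra.
  assert (HXY : X * X + Y * Y <= 4) by nra.
  destruct (Rle_dec (2 * Msup - e) 0).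
  - assert (X * X <= 4) by nra. assert (Msup * Msup * (X * X) <= Msup * Msup * 4) by (apply Rmult_le_compat_l; nra). unfold e in *. nra.
  - assert (2 * Msup - e <= Msup * Y) by (unfold e, Re in *; simpl in *; lra).
    assert ((2 * Msup - e) * (2 * Msup - e) <= (Msup * Y) * (Msup * Y)) by (apply Rmult_le_compat; lra).
    assert (Msup * Msup * (X * X) <= Msup * Msup * (4 - Y * Y)) by (apply Rmult_le_compat_l; nra).
    unfold e in *. nra. Qed.

Lemma variational w k lam : 0 < lam ->
  lam * (Re (phi w) - Msup * Re (ipP w (useq k))) <= / (INR k + 1) + Msup * (lam * lam) * Re (ipP w w) / 2.
Proof. intros Hl. destruct (useq_spec k) as [Hk1 Hk2]. set (u := useq k) in *. set (e := / (INR k + 1)) in *.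
  pose proof (Msup_bound (u ++ sc (RtoC lam) w)) as HB. rewrite phi_app, phi_sc in HB.
  set (Y := nP (u ++ sc (RtoC lam) w)) in *.
  assert (HY : Y * Y = Re (ipP u u) + 2 * lam * Re (ipP w u) + lam * lam * Re (ipP w w)).
  { unfold Y. rewrite nP_sq. rewrite ipP_appl, !ipP_appr, !ipP_scl, !ipP_scr. rewrite (ipP_sym u w).
    rewrite (ipP_real w). destruct (ipP w u) as [a1 a2]. unfold Re, Cplus, Cmult, Cconj, RtoC; simpl. ring. }
  pose proof (nP_nonneg u). assert (HA : Re (ipP u u) <= 1) by (rewrite <- nP_sq; nra).
  pose proof (nP_nonneg (u ++ sc (RtoC lam) w)). fold Y in H0. pose proof Msup_nonneg.
  pose proof (ipP_pos w) as [_ HW].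
  assert (HW' : Re (ipP w u) = Re (ipP u w)). { rewrite (ipP_sym u w). destruct (ipP u w); reflexivity. }
  set (x := 2 * lam * Re (ipP w u) + lam * lam * Re (ipP w w)) in *.
  assert (HYle : Y <= 1 + x / 2). { assert (Y * Y <= 1 + x) by (unfold x; lra). nra. }

  assert (Msup * Y <= Msup * (1 + x / 2)) by (apply Rmult_le_compat_l; lra).
  unfold x in *. unfold Re in *. simpl in *. nra. Qed.

Lemma variational_ev w eps : 0 < eps -> exists N, forall k, (N <= k)%nat -> Re (phi w) - Msup * Re (ipP w (useq k)) < eps.
Proof. intros He. pose proof Msup_nonneg. pose proof (ipP_pos w) as [_ HW]. set (W := Re (ipP w w)) in *.
  set (lam := eps / (Msup * W + 1)). assert (Hl : 0 < lam) by (unfold lam; apply Rdiv_lt_0_compat; nra).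
  destruct (inv_small (lam * eps / 2)) as [N HN]. nra. exists N. intros k Hk.
  pose proof (variational w k lam Hl) as HV. specialize (HN k Hk).
  assert (HQ : Msup * (lam * lam) * W / 2 < lam * (eps / 2)).
  { unfold lam. assert (0 < Msup * W + 1) by nra.
    replace (Msup * (eps / (Msup * W + 1) * (eps / (Msup * W + 1))) * W / 2) with (eps / (Msup * W + 1) * (eps / 2) * (Msup * W / (Msup * W + 1))) by (field; lra).
    rewrite <- (Rmult_1_r (eps / (Msup * W + 1) * (eps / 2))) at 2. apply Rmult_lt_compat_l. apply Rmult_lt_0_compat; [apply Rdiv_lt_0_compat|]; lra.
    apply (Rmult_lt_reg_r (Msup * W + 1)). lra. replace (Msup * W / (Msup * W + 1) * (Msup * W + 1)) with (Msup * W) by (field; lra). lra. }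
  assert (HF : lam * (Re (phi w) - Msup * Re (ipP w (useq k))) < lam * eps) by (fold W in HV; lra).
  apply Rmult_lt_reg_l in HF; auto. Qed.

Lemma phi_limit w : cv (fun k => Cmult (RtoC Msup) (ipP w (useq k))) (phi w).
Proof. intros e He.
  assert (Hg : forall a : C, exists N, forall k, (N <= k)%nat -> Re (Cmult a (Cminus (phi w) (Cmult (RtoC Msup) (ipP w (useq k))))) < e / 2).
  { intros a. destruct (variational_ev (sc a w) (e/2)) as [N HN]. lra. exists N. intros k Hk. specialize (HN k Hk).
    rewrite phi_sc, ipP_scl in HN. destruct (phi w) as [p1 p2]. destruct (ipP w (useq k)) as [q1 q2]. destruct a as [a1 a2].
    unfold Re, Cmult, Cminus, Cplus, Copp, RtoC in *. simpl in *. nra. }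
  destruct (Hg (RtoC 1)) as [N1 H1]. destruct (Hg (RtoC (-1))) as [N2 H2]. destruct (Hg Ci) as [N3 H3]. destruct (Hg (Copp Ci)) as [N4 H4].
  exists (max (max N1 N2) (max N3 N4)). intros k Hk.
  specialize (H1 k ltac:(lia)). specialize (H2 k ltac:(lia)). specialize (H3 k ltac:(lia)). specialize (H4 k ltac:(lia)).
  eapply Rle_lt_trans. apply Cmod_le_re_im.
  destruct (phi w) as [p1 p2]. destruct (ipP w (useq k)) as [q1 q2].
  unfold Re, Im, Cmult, Cminus, Cplus, Copp, RtoC, Ci in *. simpl in *.
  assert (Rabs (Msup * q1 - 0 * q2 + - p1) < e / 2) by (apply Rabs_def1; lra).
  assert (Rabs (Msup * q2 + 0 * q1 + - p2) < e / 2) by (apply Rabs_def1; lra). lra. Qed.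

Lemma f_in_H : memH f.
Proof. exists (fun k => sc (RtoC Msup) (useq k)). pose proof Msup_nonneg as HM. split.
  - intros e He. destruct (inv_small (e * e / (8 * Msup + 8))) as [N HN]. apply Rdiv_lt_0_compat; nra.
    exists N. intros k l Hk Hl. rewrite (equivP_nP _ (sc (RtoC Msup) (psub (useq k) (useq l)))) by eqP.
    rewrite nP_sc, Cmod_R, Rabs_right by lra. pose proof (useq_cauchy_sq k l) as HC. pose proof (HN k Hk) as HNk. pose proof (HN l Hl) as HNl.
    set (X := nP (psub (useq k) (useq l))) in *. pose proof (nP_nonneg (psub (useq k) (useq l))) as HX. fold X in HX.
    assert (Msup * X * (Msup * X) < e * e).
    { assert (4 * Msup * (/ (INR k + 1) + / (INR l + 1)) <= 4 * Msup * (2 * (e * e / (8 * Msup + 8)))) by nra.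
      assert (4 * Msup * (2 * (e * e / (8 * Msup + 8))) < e * e).
      { replace (4 * Msup * (2 * (e * e / (8 * Msup + 8)))) with (e * e * (Msup / (Msup + 1))) by (field; lra).
        rewrite <- (Rmult_1_r (e * e)) at 2. apply Rmult_lt_compat_l. nra. apply (Rmult_lt_reg_r (Msup + 1)). lra.
        replace (Msup / (Msup + 1) * (Msup + 1)) with Msup by (field; lra). lra. }
      nra. }
    assert (0 <= Msup * X) by nra. nra.
  - intros t. eapply cv_ext. 2: eapply cv_limeq. 3: apply cv_conj, (phi_limit ((t, RtoC 1) :: nil)).
    intros k. simpl. rewrite eval_sc, <- ipP_eval1, (ipP_sym (useq k)), Cmult_conj. f_equal. apply injective_projections; simpl; ring.
    apply Cconj_conj. unfold phi, lsum; simpl. apply injective_projections; simpl; ring. Qed.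
End Riesz.

End PSpace.

Lemma npow_conj n z : npow_neg n (Cconj z) = Cconj (npow_neg n z).
Proof. unfold npow_neg. destruct z as [x y]. simpl.
  replace (- y * ln (INR n)) with (- (y * ln (INR n))) by ring. rewrite cos_neg, sin_neg.
  apply injective_projections; simpl; ring. Qed.

Lemma dseries_diag x L : dseries_to x L -> cv (fun N => dsum x N N) L.
Proof. intros H e He. destruct (H e He) as [N HN]. exists N. intros; apply HN; auto. Qed.

Lemma series_cv_to u L : series_to u L -> cv (fun N => csum u N) L.
Proof. intros H e He. destruct (H e He) as [N HN]. exists N. intros; apply HN; auto. Qed.

Section Main.
Variable rho : R.
Variable a : nat -> nat -> C.
Variable K : Hrho rho -> Hrho rho -> C.
Hypothesis HK : is_dirichlet_kernel rho a K.
Variable fh : nat -> C.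
Variable f : Hrho rho -> C.
Hypothesis Hf : forall s : Hrho rho, series_to (fun n => Cmult (fh n) (npow_neg (S n) (proj1_sig s))) (f s).
Variable c : R.

Definition xco m n := Cminus (Cmult (RtoC (c ^ 2)) (a m n)) (Cmult (fh m) (Cconj (fh n))).
Definition Lk (s u : Hrho rho) := Cminus (Cmult (RtoC (c ^ 2)) (K s u)) (Cmult (f s) (Cconj (f u))).
Definition npw n (s : Hrho rho) := npow_neg (S n) (proj1_sig s).

Definition dsq (g : nat -> nat -> C) N := lsum (seq 0 N) (fun m => lsum (seq 0 N) (fun n => g m n)).

Lemma dsum_dsq x N : dsum x N N = dsq x N.
Proof. unfold dsum, dsq. rewrite csum_seq. apply lsum_ext. intros. apply csum_seq. Qed.

Lemma prod_dsq g h N : Cmult (csum g N) (Cconj (csum h N)) = dsq (fun m n => Cmult (g m) (Cconj (h n))) N.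
Proof. unfold dsq. rewrite !csum_seq, lsum_conj, <- lsum_scal_r. apply lsum_ext. intros. rewrite <- lsum_scal_l. reflexivity. Qed.

Lemma dsq_lin (k : C) x y N : Cminus (Cmult k (dsq x N)) (dsq y N) = dsq (fun m n => Cminus (Cmult k (x m n)) (y m n)) N.
Proof. unfold dsq, Cminus. rewrite <- lsum_scal_l.
  replace (Copp _) with (Cmult (RtoC (-1)) (lsum (seq 0 N) (fun m => lsum (seq 0 N) (fun n => y m n)))) by (apply injective_projections; simpl; ring).
  rewrite <- lsum_scal_l, <- lsum_plus. apply lsum_ext. intros. rewrite <- !lsum_scal_l, <- lsum_plus. apply lsum_ext. intros. apply injective_projections; simpl; ring. Qed.

Lemma L_lim s u : cv (fun N => dsq (fun m n => Cmult (Cmult (xco m n) (npw m s)) (Cconj (npw n u))) N) (Lk s u).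
Proof. pose proof (dseries_diag _ _ (proj1 (HK s u))) as H1.
  pose proof (series_cv_to _ _ (Hf s)) as H2. pose proof (cv_conj _ _ (series_cv_to _ _ (Hf u))) as H3.
  pose proof (cv_minus _ _ _ _ (cv_scal (RtoC (c^2)) _ _ H1) (cv_mult _ _ _ _ H2 H3)) as H4.
  eapply cv_ext. 2: exact H4. intros N. cbv beta. rewrite dsum_dsq, prod_dsq, dsq_lin. unfold dsq. apply lsum_ext. intros m _. apply lsum_ext. intros n _.
  unfold kterm, xco, npw. rewrite npow_conj. rewrite !Cmult_conj. unfold Cminus. ring. Qed.

Definition Kform (u : list (Hrho rho * C)) : C :=
  lsum u (fun p => lsum u (fun r => Cmult (Cmult (snd p) (Cconj (snd r))) (Lk (fst r) (fst p)))).
Definition Yv (u : list (Hrho rho * C)) n : C := lsum u (fun p => Cmult (snd p) (Cconj (npw n (fst p)))).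
Definition Sform u N := dsq (fun m n => Cmult (Cmult (Cconj (Yv u m)) (xco m n)) (Yv u n)) N.

Lemma Kform_lim u : cv (Sform u) (Kform u).
Proof. unfold Kform.
  assert (H : cv (fun N => lsum u (fun p => lsum u (fun r => Cmult (Cmult (snd p) (Cconj (snd r)))
       (dsq (fun m n => Cmult (Cmult (xco m n) (npw m (fst r))) (Cconj (npw n (fst p)))) N)))) (Kform u)).
  { apply cv_lsum. intros p _. apply cv_lsum. intros r _. apply cv_scal. apply L_lim. }
  eapply cv_ext. 2: exact H. intros N. unfold Sform, dsq.
  transitivity (lsum u (fun p => lsum u (fun r => lsum (seq 0 N) (fun m => lsum (seq 0 N) (fun n =>
      Cmult (Cmult (snd p) (Cconj (snd r))) (Cmult (Cmult (xco m n) (npw m (fst r))) (Cconj (npw n (fst p))))))))).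
  { apply lsum_ext; intros; apply lsum_ext; intros. rewrite <- lsum_scal_l. apply lsum_ext; intros. rewrite <- lsum_scal_l. reflexivity. }
  set (T := fun p r m n => Cmult (Cmult (snd p) (Cconj (snd r))) (Cmult (Cmult (xco m n) (npw m (fst r))) (Cconj (npw n (fst p))))).
  change (lsum u (fun p => lsum u (fun r => lsum (seq 0 N) (fun m => lsum (seq 0 N) (fun n => T p r m n)))) =
    lsum (seq 0 N) (fun m => lsum (seq 0 N) (fun n => Cmult (Cmult (Cconj (Yv u m)) (xco m n)) (Yv u n)))).
  transitivity (lsum u (fun p => lsum (seq 0 N) (fun m => lsum u (fun r => lsum (seq 0 N) (fun n => T p r m n))))).
  { apply lsum_ext; intros. apply lsum_swap. }
  transitivity (lsum (seq 0 N) (fun m => lsum u (fun p => lsum u (fun r => lsum (seq 0 N) (fun n => T p r m n))))).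
  { apply lsum_swap. }
  transitivity (lsum (seq 0 N) (fun m => lsum u (fun p => lsum (seq 0 N) (fun n => lsum u (fun r => T p r m n))))).
  { apply lsum_ext; intros; apply lsum_ext; intros. apply lsum_swap. }
  transitivity (lsum (seq 0 N) (fun m => lsum (seq 0 N) (fun n => lsum u (fun p => lsum u (fun r => T p r m n))))).
  { apply lsum_ext; intros. apply lsum_swap. }
  apply lsum_ext; intros m _. apply lsum_ext; intros n _.
  transitivity (lsum u (fun r => lsum u (fun p => T p r m n))). apply lsum_swap.
  unfold Yv. rewrite lsum_conj. rewrite <- lsum_scal_r. rewrite <- lsum_scal_r. apply lsum_ext; intros r _.
  rewrite <- lsum_scal_l. apply lsum_ext; intros p _. unfold T. rewrite Cmult_conj, Cconj_conj. ring. Qed.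

Lemma Kform_ipP u : Kform u = Cminus (Cmult (RtoC (c ^ 2)) (ipP rho K u u)) (Cmult (Cconj (phi rho f u)) (phi rho f u)).
Proof. unfold Kform, ipP, phi, Lk. rewrite lsum_conj. rewrite <- lsum_scal_l. rewrite <- lsum_scal_r.
  transitivity (lsum u (fun p => lsum u (fun r => Cminus (Cmult (RtoC (c^2)) (Cmult (Cmult (snd p) (Cconj (snd r))) (K (fst r) (fst p))))
     (Cmult (Cconj (Cmult (snd r) (Cconj (f (fst r))))) (Cmult (snd p) (Cconj (f (fst p)))))))).
  { apply lsum_ext; intros p _; apply lsum_ext; intros r _. rewrite Cmult_conj, Cconj_conj. unfold Cminus. ring. }
  transitivity (Cminus (lsum u (fun p => Cmult (RtoC (c^2)) (lsum u (fun r => Cmult (Cmult (snd p) (Cconj (snd r))) (K (fst r) (fst p))))))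
     (lsum u (fun p => lsum u (fun r => Cmult (Cconj (Cmult (snd r) (Cconj (f (fst r))))) (Cmult (snd p) (Cconj (f (fst p))))))) ).
  { unfold Cminus. 
    replace (Copp _) with (Cmult (RtoC (-1)) (lsum u (fun p => lsum u (fun r => Cmult (Cconj (Cmult (snd r) (Cconj (f (fst r))))) (Cmult (snd p) (Cconj (f (fst p))))))))
      by (apply injective_projections; simpl; ring).
    rewrite <- lsum_scal_l, <- lsum_plus. apply lsum_ext; intros p _. rewrite <- !lsum_scal_l, <- lsum_plus. apply lsum_ext; intros. apply injective_projections; simpl; ring. }
  f_equal. rewrite lsum_swap. apply lsum_ext; intros r _. rewrite <- lsum_scal_l. reflexivity. Qed.

Lemma cv_im_zero u l : cv u l -> (forall k, Im (u k) = 0) -> Im l = 0.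
Proof. intros H Hz. apply NNPP. intros Hn. assert (Hp : 0 < Rabs (Im l)) by (apply Rabs_pos_lt; auto).
  destruct (H _ Hp) as [N HN]. specialize (HN N (le_n _)). pose proof (im_le_Cmod (Cminus (u N) l)).
  replace (Im (Cminus (u N) l)) with (- Im l) in H0 by (unfold Cminus, Cplus, Copp, Im in *; simpl; rewrite (Hz N); ring).
  rewrite Rabs_Ropp in H0. lra. Qed.

Lemma Cmod_sq_re z : Re (Cmult (Cconj z) z) = Cmod z ^ 2.
Proof. rewrite Cmod2_alt. destruct z; simpl. ring. Qed.
Lemma Cmod_sq_im z : Im (Cmult (Cconj z) z) = 0.
Proof. destruct z; simpl. ring. Qed.

Lemma dir_back : psd_kernel K -> 0 <= c -> formally_psd xco -> in_RKHS rho K f.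
Proof. intros Hpsd Hc Hx. exists (theRKHS rho K Hpsd). simpl. apply (f_in_H rho K Hpsd f c Hc).
  intros u. pose proof (Kform_lim u) as HL.
  assert (HS : forall N, Im (Sform u N) = 0 /\ 0 <= Re (Sform u N)).
  { intros N. exact (Hx (seq 0 N) (Yv u) (seq_NoDup N 0)). }
  pose proof (cv_im_zero _ _ HL (fun N => proj1 (HS N))) as HI.
  pose proof (cv_re_nonneg _ _ HL (fun N => proj2 (HS N))) as HR.
  rewrite Kform_ipP in HR. 
  assert (E : Re (Cminus (Cmult (RtoC (c ^ 2)) (ipP rho K u u)) (Cmult (Cconj (phi rho f u)) (phi rho f u))) = c^2 * Re (ipP rho K u u) - Cmod (phi rho f u) ^ 2).
  { rewrite <- Cmod_sq_re. unfold Cminus, Cplus, Copp, Cmult, RtoC, Re. simpl. ring. }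
  rewrite E in HR. rewrite <- (nP_sq rho K Hpsd u) in HR. pose proof (nP_nonneg rho K u). pose proof (Cmod_ge_0 (phi rho f u)).
  assert (0 <= c * nP rho K u) by (apply Rmult_le_pos; auto). nra. Qed.

Section Fwd.
Hypothesis Hpsd : psd_kernel K.
Variable H : RKHS rho K.
Notation memR := (mem rho K H).
Notation ipR := (ip rho K H).

Lemma fscal0 g : fscal (RtoC 0) g = @fzero rho.
Proof. apply functional_extensionality; intros; unfold fscal, fzero. ring. Qed.

Lemma H_eval_mem u : memR (eval rho K u).
Proof. induction u as [|p u IH].
  - replace (eval rho K nil) with (@fzero rho). apply mem0. apply functional_extensionality; reflexivity.
  - replace (eval rho K (p :: u)) with (fadd (fscal (snd p) (fun s => K s (fst p))) (eval rho K u)).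
    apply memD. apply memZ. apply kmem. auto. apply functional_extensionality; reflexivity. Qed.

Lemma H_ip0 g : memR g -> ipR fzero g = RtoC 0.
Proof. intros Hg. rewrite <- (fscal0 fzero). rewrite ipZ. ring. apply mem0. auto. Qed.

Lemma H_ip_eval u g : memR g -> ipR (eval rho K u) g = lsum u (fun p => Cmult (snd p) (Cconj (g (fst p)))).
Proof. intros Hg. induction u as [|p u IH].
  - replace (eval rho K nil) with (@fzero rho). apply H_ip0; auto. apply functional_extensionality; reflexivity.
  - replace (eval rho K (p :: u)) with (fadd (fscal (snd p) (fun s => K s (fst p))) (eval rho K u)).
    2: apply functional_extensionality; reflexivity.
    rewrite ipD, ipZ, IH, ip_sym, repro; auto using kmem, memZ, H_eval_mem. Qed.

Lemma H_ipP u : ipR (eval rho K u) (eval rho K u) = ipP rho K u u.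
Proof. rewrite H_ip_eval by apply H_eval_mem. unfold ipP. apply lsum_ext; intros p _. unfold eval.
  rewrite lsum_conj, <- lsum_scal_l. apply lsum_ext; intros r _. rewrite Cmult_conj, <- (K_herm rho K Hpsd). ring. Qed.

Lemma H_real g : memR g -> ipR g g = RtoC (Re (ipR g g)).
Proof. intros Hg. pose proof (ip_sym rho K H g g Hg Hg). apply injective_projections; simpl; auto.
  destruct (ipR g g) as [x y]. unfold Cconj in H0. simpl in *. injection H0. intros. lra. Qed.

Lemma H_CS g h : memR g -> memR h -> Cmod (ipR g h) ^ 2 <= Re (ipR g g) * Re (ipR h h).
Proof. intros Hg Hh. apply CS_C. apply ip_pos; auto. intros z.
  pose proof (ip_pos rho K H (fadd g (fscal (Copp z) h)) (memD _ _ _ _ _ Hg (memZ _ _ _ _ _ Hh))) as HP.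
  rewrite ipD, !ipZ in HP; auto using memD, memZ.
  rewrite (ip_sym rho K H (fadd g (fscal (Copp z) h)) g), (ip_sym rho K H (fadd g (fscal (Copp z) h)) h) in HP; auto using memD, memZ.
  rewrite ipD, ipZ, ipD, ipZ in HP; auto using memD, memZ.
  rewrite (ip_sym rho K H g h) in HP; auto. rewrite <- (H_real g), <- (H_real h); auto.
  rewrite (H_real g) in HP at 1 by auto. rewrite (H_real h) in HP by auto.
  eapply Rle_trans. apply HP. right. rewrite !Cplus_conj, !Cmult_conj, !Cconj_conj, Copp_conj.
  destruct (ipR g h) as [w1 w2]. destruct z as [z1 z2]. unfold Re, Cplus, Cminus, Cmult, Copp, Cconj, RtoC. simpl. ring. Qed.

Hypothesis Hfm : memR f.
Hypothesis Hcdef : c = sqrt (Re (ipR f f)).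

Lemma dir_fwd1 u : Im (Kform u) = 0 /\ 0 <= Re (Kform u).
Proof. rewrite Kform_ipP. rewrite <- H_ipP.
  assert (Ephi : phi rho f u = ipR (eval rho K u) f). { rewrite H_ip_eval; auto. }
  rewrite Ephi. pose proof (H_CS (eval rho K u) f (H_eval_mem u) Hfm) as HCS.
  assert (Hc2 : c ^ 2 = Re (ipR f f)). { rewrite Hcdef. apply pow2_sqrt. apply ip_pos; auto. }
  rewrite (H_real (eval rho K u)) by apply H_eval_mem.
  set (W := ipR (eval rho K u) f) in *. set (A := Re (ipR (eval rho K u) (eval rho K u))) in *.
  split.
  - pose proof (Cmod_sq_im W). destruct W as [w1 w2]. unfold Cminus, Cplus, Copp, Cmult, Cconj, RtoC, Im in *. simpl in *. lra.
  - pose proof (Cmod_sq_re W). rewrite Hc2. replace (Re (Cminus (Cmult (RtoC (Re (ipR f f))) (RtoC A)) (Cmult (Cconj W) W)))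
      with (Re (ipR f f) * A - Re (Cmult (Cconj W) W)) by (unfold Cminus, Cplus, Copp, Cmult, RtoC, Re; simpl; ring).
    rewrite H0. lra. Qed.
End Fwd.
End Main.


Lemma series_terms_bounded u : series_cv u -> exists B, 0 < B /\ forall n, Cmod (u n) <= B.
Proof. intros [L HL]. destruct (cv_bounded _ _ (series_cv_to _ _ HL)) as [B [HB HB']].
  exists (2 * B). split. lra. intros n. replace (u n) with (Cminus (csum u (S n)) (csum u n)) by (simpl; unfold Cminus; ring).
  unfold Cminus. eapply Rle_trans. apply Cmod_triangle. rewrite Cmod_opp. pose proof (HB' (S n)). pose proof (HB' n). lra. Qed.

Lemma dsum_S x M N : dsum x (S M) N = Cplus (dsum x M N) (csum (fun n => x M n) N).
Proof. reflexivity. Qed.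

Lemma dsum_term x M N : x M N = Cminus (Cminus (dsum x (S M) (S N)) (dsum x M (S N))) (Cminus (dsum x (S M) N) (dsum x M N)).
Proof. rewrite !dsum_S. simpl. unfold Cminus. ring. Qed.

Lemma rows_bounded (y : nat -> nat -> C) N0 : (forall m, series_cv (fun n => y m n)) ->
  exists B, 0 < B /\ forall m n, (m < N0)%nat -> Cmod (y m n) <= B.
Proof. intros H. induction N0.
  - exists 1. split. lra. intros; lia.
  - destruct IHN0 as [B [HB HB']]. destruct (series_terms_bounded _ (H N0)) as [B' [HB1 HB1']].
    exists (Rmax B B'). split. eapply Rlt_le_trans. apply HB. apply Rmax_l.
    intros m n Hm. destruct (Nat.eq_dec m N0). subst. eapply Rle_trans. apply HB1'. apply Rmax_r.
    eapply Rle_trans. apply HB'. lia. apply Rmax_l. Qed.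

Lemma cols_bounded (y : nat -> nat -> C) N0 : (forall n, series_cv (fun m => y m n)) ->
  exists B, 0 < B /\ forall m n, (n < N0)%nat -> Cmod (y m n) <= B.
Proof. intros H. destruct (rows_bounded (fun m n => y n m) N0 H) as [B [HB HB']]. exists B. split. auto.
  intros m n Hn. apply (HB' n m Hn). Qed.

Lemma reg_bounded y L : regularly_cv_to y L -> exists B, 0 < B /\ forall m n, Cmod (y m n) <= B.
Proof. intros [Hd [Hr Hc]]. destruct (Hd 1 Rlt_0_1) as [N0 HN0].
  destruct (rows_bounded y N0 Hr) as [B1 [HB1 HB1']]. destruct (cols_bounded y N0 Hc) as [B2 [HB2 HB2']].
  exists (B1 + B2 + 4). split. lra. intros m n. destruct (Nat.lt_ge_cases m N0). pose proof (HB1' m n H). lra.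
  destruct (Nat.lt_ge_cases n N0). pose proof (HB2' m n H0). lra.
  rewrite dsum_term.
  pose proof (HN0 (S m) (S n) ltac:(lia) ltac:(lia)). pose proof (HN0 m (S n) ltac:(lia) ltac:(lia)).
  pose proof (HN0 (S m) n ltac:(lia) ltac:(lia)). pose proof (HN0 m n ltac:(lia) ltac:(lia)).
  set (a1 := dsum y (S m) (S n)) in *. set (a2 := dsum y m (S n)) in *. set (a3 := dsum y (S m) n) in *. set (a4 := dsum y m n) in *.
  replace (Cminus (Cminus a1 a2) (Cminus a3 a4)) with (Cplus (Cplus (Cminus a1 L) (Copp (Cminus a2 L))) (Cplus (Copp (Cminus a3 L)) (Cminus a4 L))) by ring.
  eapply Rle_trans. apply Cmod_triangle. pose proof (Cmod_triangle (Cminus a1 L) (Copp (Cminus a2 L))).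
  pose proof (Cmod_triangle (Copp (Cminus a3 L)) (Cminus a4 L)). rewrite Cmod_opp in H5, H6. lra. Qed.

Definition cexp (t : R) : C := (cos t, sin t).

Lemma cexp_add x y : Cmult (cexp x) (cexp y) = cexp (x + y).
Proof. unfold cexp. rewrite cos_plus, sin_plus. apply injective_projections; simpl; ring. Qed.
Lemma Cmod_cexp t : Cmod (cexp t) = 1.
Proof. unfold cexp, Cmod. simpl. replace (cos t * (cos t * 1) + sin t * (sin t * 1)) with (Rsqr (sin t) + Rsqr (cos t)) by (unfold Rsqr; ring).
  rewrite sin2_cos2. apply sqrt_1. Qed.
Lemma cexp_0 : cexp 0 = RtoC 1.
Proof. unfold cexp. rewrite cos_0, sin_0. reflexivity. Qed.

Lemma lsum_one {A} (l : list A) : lsum l (fun _ => RtoC 1) = RtoC (INR (length l)).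
Proof. induction l. reflexivity. rewrite lsum_cons, IHl. simpl length. rewrite S_INR. apply injective_projections; simpl; ring. Qed.

Lemma rsum_one {A} (l : list A) : rsum l (fun _ => 1) = INR (length l).
Proof. induction l. reflexivity. rewrite rsum_cons, IHl. simpl length. rewrite S_INR. ring. Qed.

Definition Gf (P : nat) (t : R) : C := Cmult (RtoC (/ INR (S P))) (lsum (seq 0 (S P)) (fun p => cexp (INR p * t))).

Lemma Gf_0 P : Gf P 0 = RtoC 1.
Proof. unfold Gf. rewrite (lsum_ext _ _ (fun _ => RtoC 1)). rewrite lsum_one, length_seq.
  pose proof (pos_INR P). rewrite S_INR. apply injective_projections; simpl. field; lra. ring.
  intros. rewrite Rmult_0_r. apply cexp_0. Qed.

Lemma Gf_bound P t : Cmod (Gf P t) <= 1.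
Proof. unfold Gf. rewrite Cmod_mult, Cmod_R. eapply Rle_trans. apply Rmult_le_compat_l. apply Rabs_pos. apply Cmod_lsum.
  rewrite (rsum_ext _ _ (fun _ => 1)). rewrite rsum_one, length_seq. rewrite Rabs_right. rewrite Rinv_l. lra.
  rewrite S_INR. pose proof (pos_INR P). lra. apply Rle_ge, Rlt_le, Rinv_0_lt_compat. rewrite S_INR. pose proof (pos_INR P). lra.
  intros. apply Cmod_cexp. Qed.

Lemma geom t n : Cmult (lsum (seq 0 n) (fun p => cexp (INR p * t))) (Cminus (RtoC 1) (cexp t)) = Cminus (RtoC 1) (cexp (INR n * t)).
Proof. induction n.
  - simpl. rewrite Rmult_0_l, cexp_0. unfold lsum; simpl. unfold Cminus. ring.
  - replace (cexp (INR (S n) * t)) with (Cmult (cexp (INR n * t)) (cexp t)) by (rewrite cexp_add, S_INR; f_equal; ring).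
    rewrite seq_S, lsum_app. simpl (0 + n)%nat. rewrite Cmult_plus_distr_r, IHn. unfold lsum; simpl.
    unfold Cminus. ring. Qed.

Lemma Gf_lim t : cexp t <> RtoC 1 -> cv (fun P => Gf P t) (RtoC 0).
Proof. intros Hne. set (d := Cmod (Cminus (RtoC 1) (cexp t))).
  assert (Hd : 0 < d). { apply Cmod_gt_0. intros He. apply Hne. replace (cexp t) with (Cminus (RtoC 1) (Cminus (RtoC 1) (cexp t))) by ring. rewrite He. ring. }
  intros e He. destruct (inv_small (e * d / 2)) as [N HN]. apply Rmult_lt_0_compat. nra. lra.
  exists N. intros P HP. replace (Cminus (Gf P t) 0) with (Gf P t) by ring. unfold Gf. rewrite Cmod_mult, Cmod_R.
  assert (HS : Cmod (lsum (seq 0 (S P)) (fun p => cexp (INR p * t))) <= 2 / d).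
  { pose proof (geom t (S P)) as Hg. apply (f_equal Cmod) in Hg. rewrite Cmod_mult in Hg. fold d in Hg.
    assert (Cmod (Cminus (RtoC 1) (cexp (INR (S P) * t))) <= 2).
    { unfold Cminus. eapply Rle_trans. apply Cmod_triangle. rewrite Cmod_opp, Cmod_cexp, Cmod_1. lra. }
    apply (Rmult_le_reg_r d). auto. replace (2 / d * d) with 2 by (field; lra). lra. }
  specialize (HN P HP). rewrite S_INR in *. pose proof (pos_INR P). rewrite Rabs_right by (apply Rle_ge, Rlt_le, Rinv_0_lt_compat; lra).
  apply Rle_lt_trans with (/ (INR P + 1) * (2 / d)). apply Rmult_le_compat_l. apply Rlt_le, Rinv_0_lt_compat; lra. auto.
  apply Rlt_le_trans with (e * d / 2 * (2 / d)). apply Rmult_lt_compat_r. apply Rdiv_lt_0_compat; lra. auto. right; field; lra. Qed.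

Definition qq (m : nat) : R := / ((INR m + 1) * (INR m + 1)).
Lemma qq_pos m : 0 <= qq m.
Proof. unfold qq. pose proof (pos_INR m). apply Rlt_le, Rinv_0_lt_compat. nra. Qed.

Lemma qq_tail a L : (1 <= a)%nat -> rsum (seq a L) qq <= / INR a - / INR (a + L).
Proof. revert a. induction L; intros a Ha.
  - simpl. rewrite Nat.add_0_r. unfold rsum; simpl. lra.
  - simpl seq. rewrite rsum_cons. specialize (IHL (S a) ltac:(lia)). replace (a + S L)%nat with (S a + L)%nat by lia.
    assert (qq a + / INR (S a) <= / INR a).
    { unfold qq. rewrite S_INR. apply le_INR in Ha. simpl in Ha.
      replace (/ ((INR a + 1) * (INR a + 1)) + / (INR a + 1)) with ((INR a + 2) / ((INR a + 1) * (INR a + 1))) by (field; lra).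
      apply (Rmult_le_reg_r ((INR a + 1) * (INR a + 1) * INR a)). nra.
      replace ((INR a + 2) / ((INR a + 1) * (INR a + 1)) * ((INR a + 1) * (INR a + 1) * INR a)) with ((INR a + 2) * INR a) by (field; lra).
      replace (/ INR a * ((INR a + 1) * (INR a + 1) * INR a)) with ((INR a + 1) * (INR a + 1)) by (field; lra). nra. }
    lra. Qed.

Lemma qq_tail' a L : (1 <= a)%nat -> rsum (seq a L) qq <= / INR a.
Proof. intros Ha. pose proof (qq_tail a L Ha). assert (0 < / INR (a + L)). { apply Rinv_0_lt_compat. apply lt_0_INR. lia. } lra. Qed.

Lemma qq_all L : rsum (seq 0 L) qq <= 2.
Proof. destruct L. unfold rsum; simpl; lra. simpl seq. rewrite rsum_cons. pose proof (qq_tail' 1 L (le_n _)).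
  unfold qq at 1. simpl INR. replace (/ ((0 + 1) * (0 + 1))) with 1 by (field). simpl in H. rewrite Rinv_1 in H. lra. Qed.

Lemma dsum_bound (L1 L2 : list nat) (z : nat -> nat -> C) C0 q : 0 <= C0 -> (forall m, 0 <= q m) ->
  (forall m n, Cmod (z m n) <= C0 * q m * q n) ->
  Cmod (lsum L1 (fun m => lsum L2 (fun n => z m n))) <= C0 * rsum L1 q * rsum L2 q.
Proof. intros HC Hq Hz. eapply Rle_trans. apply Cmod_lsum.
  apply Rle_trans with (rsum L1 (fun m => (C0 * rsum L2 q) * q m)).
  - apply rsum_le. intros m _. eapply Rle_trans. apply Cmod_lsum.
    apply Rle_trans with (rsum L2 (fun n => (C0 * q m) * q n)). apply rsum_le. intros n _. eapply Rle_trans. apply Hz. right; ring.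
    rewrite rsum_scal_l. right; ring.
  - rewrite rsum_scal_l. right; ring. Qed.

Lemma dsq_tail z C0 M0 N : (1 <= M0)%nat -> (M0 <= N)%nat -> 0 <= C0 ->
  (forall m n, Cmod (z m n) <= C0 * qq m * qq n) -> Cmod (Cminus (dsq z N) (dsq z M0)) <= 4 * C0 / INR M0.
Proof. intros H1 H2 HC Hz. unfold dsq.
  assert (E : seq 0 N = seq 0 M0 ++ seq M0 (N - M0)). { rewrite <- seq_app. f_equal. lia. }
  rewrite E.
  set (A := seq 0 M0). set (B := seq M0 (N - M0)). rewrite lsum_app.
  rewrite (lsum_ext A _ (fun m => Cplus (lsum A (fun n => z m n)) (lsum B (fun n => z m n)))) by (intros; apply lsum_app).
  rewrite lsum_plus. replace (Cminus (Cplus (Cplus (lsum A (fun m => lsum A (fun n => z m n))) (lsum A (fun m => lsum B (fun n => z m n))))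
     (lsum B (fun m => lsum (A ++ B) (fun n => z m n)))) (lsum A (fun m => lsum A (fun n => z m n))))
    with (Cplus (lsum A (fun m => lsum B (fun n => z m n))) (lsum B (fun m => lsum (A ++ B) (fun n => z m n)))) by ring.
  eapply Rle_trans. apply Cmod_triangle.
  pose proof (dsum_bound A B z C0 qq HC qq_pos Hz). pose proof (dsum_bound B (A ++ B) z C0 qq HC qq_pos Hz).
  pose proof (qq_all M0). pose proof (qq_tail' M0 (N - M0) H1). 
  assert (rsum (A ++ B) qq <= 2). { unfold A, B. rewrite <- seq_app. replace (M0 + (N - M0))%nat with N by lia. apply qq_all. }
  assert (0 <= rsum A qq) by (apply rsum_nonneg; intros; apply qq_pos). assert (0 <= rsum B qq) by (apply rsum_nonneg; intros; apply qq_pos).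
  assert (0 <= rsum (A ++ B) qq) by (apply rsum_nonneg; intros; apply qq_pos).
  fold A B in H3, H4.
  assert (C0 * rsum A qq * rsum B qq <= C0 * 2 * / INR M0). { apply Rmult_le_compat; try nra. }
  assert (C0 * rsum B qq * rsum (A ++ B) qq <= C0 * / INR M0 * 2). { apply Rmult_le_compat; try nra. }
  unfold Rdiv. nra. Qed.

Definition lnn (m : nat) : R := ln (INR (S m)).
Lemma INR_S_pos m : 0 < INR (S m). Proof. rewrite S_INR. pose proof (pos_INR m). lra. Qed.
Lemma lnn_nonneg m : 0 <= lnn m.
Proof. unfold lnn. destruct m. simpl. rewrite ln_1. lra. rewrite <- ln_1. left. apply ln_increasing. lra.
  rewrite S_INR. pose proof (INR_S_pos m). lra. Qed.
Lemma lnn_inj m n : lnn m = lnn n -> m = n.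
Proof. unfold lnn. intros H. apply ln_inv in H; try apply INR_S_pos. apply INR_eq in H. lia. Qed.

Lemma exp_m2 m : exp (- 2 * lnn m) = qq m.
Proof. unfold qq, lnn. replace (- 2 * ln (INR (S m))) with (- (ln (INR (S m)) + ln (INR (S m)))) by ring.
  rewrite exp_Ropp, exp_plus, exp_ln by apply INR_S_pos. rewrite S_INR. reflexivity. Qed.

Lemma rsum_In_le {A} (l : list A) g x : (forall y, In y l -> 0 <= g y) -> In x l -> g x <= rsum l g.
Proof. induction l; intros Hp Hx. destruct Hx. rewrite rsum_cons. destruct Hx as [->|Hx].
  assert (0 <= rsum l g) by (apply rsum_nonneg; intros; apply Hp; right; auto). lra.
  assert (0 <= g a) by (apply Hp; left; auto). pose proof (IHl (fun y Hy => Hp y (or_intror Hy)) Hx). lra. Qed.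

Lemma delta_sum (g : nat -> C) k M : (k < M)%nat -> lsum (seq 0 M) (fun m => if Nat.eq_dec k m then g m else RtoC 0) = g k.
Proof. induction M; intros H. lia. rewrite seq_S, lsum_app. simpl (0 + M)%nat. unfold lsum at 2. simpl.
  destruct (Nat.eq_dec k M).
  - subst. rewrite (lsum_ext _ _ (fun _ => RtoC 0)). rewrite lsum_zero. ring. intros m Hm. apply in_seq in Hm.
    destruct (Nat.eq_dec M m). lia. reflexivity.
  - rewrite IHM by lia. ring. Qed.

Section Extract.
Variable rho : R.
Variable a : nat -> nat -> C.
Variable K : Hrho rho -> Hrho rho -> C.
Hypothesis HK : is_dirichlet_kernel rho a K.
Variable fh : nat -> C.
Variable f : Hrho rho -> C.
Hypothesis Hf : forall s : Hrho rho, series_to (fun n => Cmult (fh n) (npow_neg (S n) (proj1_sig s))) (f s).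
Variable c : R.
Hypothesis Hpos : forall u, Im (Kform rho K f c u) = 0 /\ 0 <= Re (Kform rho K f c u).

Definition sig0 := rho + 1.
Definition sig1 := rho + 3.
Lemma s0_prop : rho < Re (RtoC sig0). Proof. unfold sig0, Re, RtoC; simpl; lra. Qed.
Definition s0 : Hrho rho := exist (fun s => rho < Re s) (RtoC sig0) s0_prop.
Definition Pm (m : nat) : R := exp (- sig0 * lnn m).

Lemma Cmod_npw_s0 m : Cmod (npw rho m s0) = Pm m.
Proof. unfold npw, s0. cbn [proj1_sig]. unfold npow_neg. change (Re (RtoC sig0)) with sig0. change (Im (RtoC sig0)) with 0.
  rewrite !Rmult_0_l, cos_0, sin_0. fold (lnn m). unfold Pm.
  unfold Cmod. cbn [fst snd pow]. replace (exp (- sig0 * lnn m) * 1 * (exp (- sig0 * lnn m) * 1 * 1) + - (exp (- sig0 * lnn m) * 0) * (- (exp (- sig0 * lnn m) * 0) * 1))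
   with (exp (- sig0 * lnn m) * exp (- sig0 * lnn m)) by ring. apply sqrt_square. apply Rlt_le, exp_pos. Qed.

Lemma x_bound : exists Bx, 0 <= Bx /\ forall m n, Cmod (xco a fh c m n) * Pm m * Pm n <= Bx.
Proof. destruct (reg_bounded _ _ (HK s0 s0)) as [Ba [HBa HBa']].
  assert (Hs : series_cv (fun n => Cmult (fh n) (npow_neg (S n) (proj1_sig s0)))) by (eexists; apply Hf).
  destruct (series_terms_bounded _ Hs) as [Bf [HBf HBf']].
  exists (c ^ 2 * Ba + Bf * Bf). split. pose proof (pow2_ge_0 c). nra.
  intros m n. specialize (HBa' m n). specialize (HBf' m) as Hm. specialize (HBf' n) as Hn.
  unfold kterm in HBa'. rewrite npow_conj, !Cmod_mult, Cmod_conj in HBa'. fold (npw rho m s0) (npw rho n s0) in HBa'.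
  rewrite Cmod_mult in Hm, Hn. fold (npw rho m s0) in Hm. fold (npw rho n s0) in Hn. rewrite !Cmod_npw_s0 in *.
  unfold xco. unfold Cminus. pose proof (Cmod_triangle (Cmult (RtoC (c ^ 2)) (a m n)) (Copp (Cmult (fh m) (Cconj (fh n))))).
  rewrite Cmod_opp, !Cmod_mult, Cmod_conj, Cmod_R, Rabs_right in H by (apply Rle_ge, pow2_ge_0).
  assert (Hp : 0 < Pm m * Pm n) by (apply Rmult_lt_0_compat; apply exp_pos).
  unfold Cminus in *. 
  apply Rle_trans with ((c ^ 2 * Cmod (a m n) + Cmod (fh m) * Cmod (fh n)) * (Pm m * Pm n)).
  rewrite Rmult_assoc. apply Rmult_le_compat_r; lra.
  replace ((c ^ 2 * Cmod (a m n) + Cmod (fh m) * Cmod (fh n)) * (Pm m * Pm n)) with (c^2 * (Cmod (a m n) * Pm m * Pm n) + (Cmod (fh m) * Pm m) * (Cmod (fh n) * Pm n)) by ring.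
  pose proof (pow2_ge_0 c). pose proof (Cmod_ge_0 (fh m)). pose proof (Cmod_ge_0 (fh n)). pose proof (exp_pos (- sig0 * lnn m)). pose proof (exp_pos (- sig0 * lnn n)).
  fold (Pm m) (Pm n) in *.
  apply Rplus_le_compat. apply Rmult_le_compat_l; lra. apply Rmult_le_compat; try lra; apply Rmult_le_pos; lra. Qed.

Lemma tp_prop h p : rho < Re (sig1, INR p * h). Proof. unfold sig1, Re; simpl; lra. Qed.
Definition tp h p : Hrho rho := exist (fun s => rho < Re s) (sig1, INR p * h) (tp_prop h p).

Lemma conj_npw_tp n h p : Cconj (npw rho n (tp h p)) = Cmult (RtoC (exp (- sig1 * lnn n))) (cexp (INR p * h * lnn n)).
Proof. unfold npw, tp. cbn [proj1_sig]. unfold npow_neg. change (Re (sig1, INR p * h)) with sig1. change (Im (sig1, INR p * h)) with (INR p * h).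
  fold (lnn n). unfold cexp, Cconj, Cmult, RtoC. apply injective_projections; cbn [fst snd]; ring. Qed.

Definition cpf (F : list nat) (w : nat -> C) h P p : C :=
  Cmult (RtoC (/ INR (S P))) (lsum F (fun k => Cmult (w k) (Cmult (RtoC (exp (sig1 * lnn k))) (cexp (- (INR p * h * lnn k)))))).
Definition ulist F w h P : list (Hrho rho * C) := map (fun p => (tp h p, cpf F w h P p)) (seq 0 (S P)).

Lemma Yv_formula F w h P n : Yv rho (ulist F w h P) n =
  lsum F (fun k => Cmult (w k) (Cmult (RtoC (exp (sig1 * lnn k) * exp (- sig1 * lnn n))) (Gf P (h * (lnn n - lnn k))))).
Proof. unfold Yv, ulist. rewrite lsum_map. cbn [fst snd].
  transitivity (lsum (seq 0 (S P)) (fun p => lsum F (fun k => Cmult (w k) (Cmult (RtoC (exp (sig1 * lnn k) * exp (- sig1 * lnn n)))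
      (Cmult (RtoC (/ INR (S P))) (cexp (INR p * (h * (lnn n - lnn k))))))))).
  { apply lsum_ext; intros p _. rewrite conj_npw_tp. unfold cpf. rewrite <- lsum_scal_l, <- lsum_scal_r. apply lsum_ext; intros k _.
    replace (cexp (INR p * (h * (lnn n - lnn k)))) with (Cmult (cexp (- (INR p * h * lnn k))) (cexp (INR p * h * lnn n))).
    apply injective_projections; simpl; ring. rewrite cexp_add. f_equal. ring. }
  rewrite lsum_swap. apply lsum_ext; intros k _. unfold Gf. rewrite <- !lsum_scal_l. apply lsum_ext; intros p _. reflexivity. Qed.

Definition Wsum (F : list nat) (w : nat -> C) : R := rsum F (fun k => Cmod (w k) * exp (sig1 * lnn k)).
Lemma Wsum_nonneg F w : 0 <= Wsum F w.
Proof. apply rsum_nonneg. intros. apply Rmult_le_pos. apply Cmod_ge_0. apply Rlt_le, exp_pos. Qed.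

Lemma Y_bound F w h P n : Cmod (Yv rho (ulist F w h P) n) <= Wsum F w * exp (- sig1 * lnn n).
Proof. rewrite Yv_formula. eapply Rle_trans. apply Cmod_lsum. unfold Wsum. rewrite (Rmult_comm (rsum _ _)), <- rsum_scal_l.
  apply rsum_le. intros k _. rewrite !Cmod_mult, Cmod_R. pose proof (Gf_bound P (h * (lnn n - lnn k))).
  pose proof (exp_pos (sig1 * lnn k)). pose proof (exp_pos (- sig1 * lnn n)). pose proof (Cmod_ge_0 (w k)).
  rewrite Rabs_right by (apply Rle_ge, Rmult_le_pos; lra).
  pose proof (Cmod_ge_0 (Gf P (h * (lnn n - lnn k)))).
  assert (0 <= exp (sig1 * lnn k) * exp (- sig1 * lnn n)) by (apply Rmult_le_pos; lra).
  apply Rle_trans with (Cmod (w k) * (exp (sig1 * lnn k) * exp (- sig1 * lnn n) * 1)).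
  apply Rmult_le_compat_l. lra. apply Rmult_le_compat_l; lra. right; ring. Qed.

Lemma Y_lim F w h n : (forall k, In k F -> k <> n -> cexp (h * (lnn n - lnn k)) <> RtoC 1) ->
  cv (fun P => Yv rho (ulist F w h P) n) (lsum F (fun k => if Nat.eq_dec k n then w k else RtoC 0)).
Proof. intros Hg. eapply cv_ext. intros P. symmetry. apply Yv_formula. apply cv_lsum. intros k Hk.
  destruct (Nat.eq_dec k n).
  - subst. eapply cv_ext. 2: apply cv_const. intros P. replace (h * (lnn n - lnn n)) with 0 by ring. rewrite Gf_0.
    rewrite <- exp_plus. replace (sig1 * lnn n + - sig1 * lnn n) with 0 by ring. rewrite exp_0. ring.
  - eapply cv_limeq. 2: apply cv_scal, cv_scal, Gf_lim, Hg; auto. ring. Qed.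

Definition Lsum (F : list nat) M0 := rsum (seq 0 M0) lnn + rsum F lnn.
Lemma Lsum_nonneg F M0 : 0 <= Lsum F M0.
Proof. unfold Lsum. pose proof (rsum_nonneg (seq 0 M0) lnn (fun x _ => lnn_nonneg x)). pose proof (rsum_nonneg F lnn (fun x _ => lnn_nonneg x)). lra. Qed.

Lemma good_h F M0 n k : (n < M0)%nat -> In k F -> k <> n -> cexp (/ (Lsum F M0 + 1) * (lnn n - lnn k)) <> RtoC 1.
Proof. intros Hn Hk Hne Heq. set (h := / (Lsum F M0 + 1)). pose proof (Lsum_nonneg F M0).
  assert (Hh : 0 < h) by (unfold h; apply Rinv_0_lt_compat; lra).
  assert (H1 : lnn n <= rsum (seq 0 M0) lnn) by (apply rsum_In_le; [intros; apply lnn_nonneg | apply in_seq; lia]).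
  assert (H2 : lnn k <= rsum F lnn) by (apply rsum_In_le; [intros; apply lnn_nonneg | auto]).
  pose proof (lnn_nonneg n). pose proof (lnn_nonneg k).
  assert (Hd : lnn n - lnn k <> 0). { intros E. apply Hne. symmetry. apply lnn_inj. lra. }
  set (t := h * (lnn n - lnn k)) in *.
  assert (Ht : Rabs t < 1).
  { unfold t. rewrite Rabs_mult, Rabs_right by lra. apply Rle_lt_trans with (h * Lsum F M0).
    apply Rmult_le_compat_l. lra. unfold Lsum. apply Rabs_le. lra.
    unfold h. apply (Rmult_lt_reg_r (Lsum F M0 + 1)). lra. replace (/ (Lsum F M0 + 1) * Lsum F M0 * (Lsum F M0 + 1)) with (Lsum F M0) by (field; lra). lra. }
  assert (Ht0 : t <> 0). { unfold t. apply Rmult_integral_contrapositive. split; lra. }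
  assert (Hs : sin t = 0). { unfold cexp in Heq. apply (f_equal snd) in Heq. simpl in Heq. auto. }
  pose proof PI2_1. apply Rabs_def2 in Ht. destruct (Rlt_dec 0 t).
  - pose proof (sin_gt_0 t r ltac:(lra)). lra.
  - assert (0 < - t) by lra. pose proof (sin_gt_0 (- t) H5 ltac:(lra)). rewrite sin_neg in H6. lra. Qed.

Lemma delta_Q (F : list nat) (w : nat -> C) (x : nat -> nat -> C) M0 : (forall k, In k F -> (k < M0)%nat) ->
  dsq (fun m n => Cmult (Cmult (Cconj (lsum F (fun k => if Nat.eq_dec k m then w k else RtoC 0))) (x m n)) (lsum F (fun k => if Nat.eq_dec k n then w k else RtoC 0))) M0
  = lsum F (fun m => lsum F (fun n => Cmult (Cmult (Cconj (w m)) (x m n)) (w n))).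
Proof. intros HF. unfold dsq.
  transitivity (lsum (seq 0 M0) (fun m => lsum (seq 0 M0) (fun n => lsum F (fun k => lsum F (fun k' =>
     if Nat.eq_dec k m then (if Nat.eq_dec k' n then Cmult (Cmult (Cconj (w k)) (x m n)) (w k') else RtoC 0) else RtoC 0))))).
  { apply lsum_ext; intros m _; apply lsum_ext; intros n _. rewrite lsum_conj. rewrite <- lsum_scal_r, <- lsum_scal_r. apply lsum_ext; intros k _.
    rewrite <- lsum_scal_l. apply lsum_ext; intros k' _. destruct (Nat.eq_dec k m); destruct (Nat.eq_dec k' n); simpl;
    apply injective_projections; simpl; ring. }
  transitivity (lsum F (fun k => lsum F (fun k' => lsum (seq 0 M0) (fun m => lsum (seq 0 M0) (fun n =>
     if Nat.eq_dec k m then (if Nat.eq_dec k' n then Cmult (Cmult (Cconj (w k)) (x m n)) (w k') else RtoC 0) else RtoC 0))))).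
  { transitivity (lsum (seq 0 M0) (fun m => lsum F (fun k => lsum (seq 0 M0) (fun n => lsum F (fun k' =>
     if Nat.eq_dec k m then (if Nat.eq_dec k' n then Cmult (Cmult (Cconj (w k)) (x m n)) (w k') else RtoC 0) else RtoC 0))))).
    { apply lsum_ext; intros. apply lsum_swap. }
    rewrite lsum_swap. apply lsum_ext; intros k _.
    transitivity (lsum (seq 0 M0) (fun m => lsum F (fun k' => lsum (seq 0 M0) (fun n =>
     if Nat.eq_dec k m then (if Nat.eq_dec k' n then Cmult (Cmult (Cconj (w k)) (x m n)) (w k') else RtoC 0) else RtoC 0)))).
    { apply lsum_ext; intros. apply lsum_swap. }
    apply lsum_swap. }
  apply lsum_ext; intros k Hk; apply lsum_ext; intros k' Hk'.
  transitivity (lsum (seq 0 M0) (fun m => if Nat.eq_dec k m then lsum (seq 0 M0) (fun n => if Nat.eq_dec k' n then Cmult (Cmult (Cconj (w k)) (x m n)) (w k') else RtoC 0) else RtoC 0)).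
  { apply lsum_ext; intros m _. destruct (Nat.eq_dec k m). reflexivity. apply lsum_zero. }
  rewrite (delta_sum (fun m => lsum (seq 0 M0) (fun n => if Nat.eq_dec k' n then Cmult (Cmult (Cconj (w k)) (x m n)) (w k') else RtoC 0))) by (apply HF; auto).
  rewrite (delta_sum (fun n => Cmult (Cmult (Cconj (w k)) (x k n)) (w k'))) by (apply HF; auto). reflexivity. Qed.

Lemma e_split m : exp (- sig1 * lnn m) = Pm m * qq m.
Proof. unfold Pm. rewrite <- exp_m2, <- exp_plus. f_equal. unfold sig1, sig0. ring. Qed.

Lemma In_le_sum (F : list nat) k : In k F -> (k <= fold_right Nat.add 0 F)%nat.
Proof. induction F; simpl; intros H. destruct H. destruct H. subst; lia. specialize (IHF H). lia. Qed.

Lemma z_bound F w h P Bx : (forall m n, Cmod (xco a fh c m n) * Pm m * Pm n <= Bx) -> forall m n,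
  Cmod (Cmult (Cmult (Cconj (Yv rho (ulist F w h P) m)) (xco a fh c m n)) (Yv rho (ulist F w h P) n)) <= (Wsum F w * Wsum F w * Bx) * qq m * qq n.
Proof. intros HB m n. rewrite !Cmod_mult, Cmod_conj. pose proof (Y_bound F w h P m). pose proof (Y_bound F w h P n).
  rewrite e_split in H, H0. specialize (HB m n). pose proof (Wsum_nonneg F w). pose proof (qq_pos m). pose proof (qq_pos n).
  pose proof (exp_pos (- sig0 * lnn m)). pose proof (exp_pos (- sig0 * lnn n)). fold (Pm m) (Pm n) in *.
  pose proof (Cmod_ge_0 (Yv rho (ulist F w h P) m)). pose proof (Cmod_ge_0 (Yv rho (ulist F w h P) n)). pose proof (Cmod_ge_0 (xco a fh c m n)).
  set (Ym := Cmod (Yv rho (ulist F w h P) m)) in *. set (Yn := Cmod (Yv rho (ulist F w h P) n)) in *. set (X := Cmod (xco a fh c m n)) in *.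
  set (Wf := Wsum F w) in *.
  apply Rle_trans with ((Wf * (Pm m * qq m)) * X * (Wf * (Pm n * qq n))).
  apply Rmult_le_compat. apply Rmult_le_pos; auto. auto. apply Rmult_le_compat; auto; lra. auto.
  replace (Wf * (Pm m * qq m) * X * (Wf * (Pm n * qq n))) with (Wf * Wf * (X * Pm m * Pm n) * qq m * qq n) by ring.
  apply Rmult_le_compat_r. auto. apply Rmult_le_compat_r. auto. apply Rmult_le_compat_l. nra. auto. Qed.

Lemma extraction : formally_psd (xco a fh c).
Proof. intros F w _. cbv zeta.
  set (Q := lsum F (fun m => lsum F (fun n => Cmult (Cmult (Cconj (w m)) (xco a fh c m n)) (w n)))).
  change (Im Q = 0 /\ 0 <= Re Q).
  assert (Happ : forall eps, 0 < eps -> exists z, Im z = 0 /\ 0 <= Re z /\ Cmod (Cminus Q z) < eps).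
  { intros e He. destruct x_bound as [Bx [HBx HBx']].
    set (C0 := Wsum F w * Wsum F w * Bx). assert (HC0 : 0 <= C0) by (unfold C0; pose proof (Wsum_nonneg F w); apply Rmult_le_pos; nra).
    destruct (INR_unbounded (8 * C0 / e)) as [N1 HN1].
    set (M0 := S (fold_right Nat.add 0%nat F + N1)%nat).
    assert (HM0 : forall k, In k F -> (k < M0)%nat) by (intros k Hk; apply In_le_sum in Hk; unfold M0; lia).
    assert (HM1 : (1 <= M0)%nat) by (unfold M0; lia).
    assert (HT : 4 * C0 / INR M0 < e / 2).
    { assert (INR N1 <= INR M0) by (apply le_INR; unfold M0; lia). assert (0 < INR M0) by (apply lt_0_INR; lia).
      apply (Rmult_lt_reg_r (INR M0)). auto. replace (4 * C0 / INR M0 * INR M0) with (4 * C0) by (field; lra).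
      assert (8 * C0 / e < INR M0) by lra. apply (Rmult_lt_compat_l e) in H1; auto.
      replace (e * (8 * C0 / e)) with (8 * C0) in H1 by (field; lra). lra. }
    set (h := / (Lsum F M0 + 1)).
    assert (HS : cv (fun P => Sform rho a fh c (ulist F w h P) M0) Q).
    { unfold Sform. eapply cv_limeq. apply (delta_Q F w (xco a fh c) M0 HM0). unfold dsq.
      apply cv_lsum. intros m Hm. apply cv_lsum. intros n Hn. apply in_seq in Hm. apply in_seq in Hn.
      apply cv_mult. apply cv_mult. apply cv_conj. apply Y_lim. intros; apply good_h; auto; lia. apply cv_const.
      apply Y_lim. intros; apply good_h; auto; lia. }
    destruct (HS (e/4)) as [P HP]. lra. specialize (HP P (le_n _)).
    set (u := ulist F w h P) in *.
    exists (Kform rho K f c u). split. apply Hpos. split. apply Hpos.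
    destruct (Kform_lim rho a K HK fh f Hf c u (e/4)) as [N2 HN2]. lra.
    set (N := max N2 M0). specialize (HN2 N ltac:(unfold N; lia)).
    assert (Htail : Cmod (Cminus (Sform rho a fh c u N) (Sform rho a fh c u M0)) <= 4 * C0 / INR M0).
    { unfold Sform. apply dsq_tail; auto. unfold N; lia. intros m n. apply z_bound. auto. }
    replace (Cminus Q (Kform rho K f c u)) with (Cplus (Cplus (Copp (Cminus (Sform rho a fh c u M0) Q)) (Copp (Cminus (Sform rho a fh c u N) (Sform rho a fh c u M0)))) (Cminus (Sform rho a fh c u N) (Kform rho K f c u))) by ring.
    eapply Rle_lt_trans. apply Cmod_triangle. pose proof (Cmod_triangle (Copp (Cminus (Sform rho a fh c u M0) Q)) (Copp (Cminus (Sform rho a fh c u N) (Sform rho a fh c u M0)))).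
    rewrite !Cmod_opp in *. lra. }
  split.
  - apply NNPP. intros Hne. assert (Hp : 0 < Rabs (Im Q)) by (apply Rabs_pos_lt; auto).
    destruct (Happ _ Hp) as [z [Hz1 [Hz2 Hz3]]]. pose proof (im_le_Cmod (Cminus Q z)).
    replace (Im (Cminus Q z)) with (Im Q) in H by (unfold Cminus, Cplus, Copp, Im in *; simpl; rewrite Hz1; ring). lra.
  - apply Rnot_lt_le. intros Hlt. destruct (Happ (- Re Q)) as [z [Hz1 [Hz2 Hz3]]]. lra.
    pose proof (re_le_Cmod (Cminus Q z)). replace (Re (Cminus Q z)) with (Re Q - Re z) in H by (unfold Cminus, Cplus, Copp, Re; simpl; ring).
    assert (Rabs (Re Q - Re z) < - Re Q) by lra. apply Rabs_def2 in H0. lra. Qed.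
End Extract.


Theorem corollary2p8 (rho : R) (a : nat -> nat -> C)
  (K : Hrho rho -> Hrho rho -> C)
  (HK : is_dirichlet_kernel rho a K) (Hpsd : psd_kernel K)
  (fh : nat -> C) (f : Hrho rho -> C)
  (Hf : forall s : Hrho rho,
          series_to (fun n => Cmult (fh n) (npow_neg (S n) (proj1_sig s))) (f s)) :
  in_RKHS rho K f <->
  exists c : R, 0 <= c /\
    formally_psd (fun m n =>
      Cminus (Cmult (RtoC (c ^ 2)) (a m n)) (Cmult (fh m) (Cconj (fh n)))).
Proof. split.
  - intros [H Hm]. exists (sqrt (Re (ip rho K H f f))). split. apply sqrt_pos.
    apply (extraction rho a K HK fh f Hf). intros u. apply (dir_fwd1 rho K f _ Hpsd H Hm eq_refl u).
  - intros [c [Hc Hx]]. apply (dir_back rho a K HK fh f Hf c Hpsd Hc Hx).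
Qed.
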